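(* Assume the standing assumptions on $A,\Omega,R,K$ stated in the context, and assume that there exists $\theta_0\in]-A,A[$ such that $\min_{\theta\in]-A,A[}\lambda(\theta,0)=\lambda(\theta_0,0)<0$. Then $\mu_\varepsilon\to\lambda(\theta_0,0)$ as $\varepsilon\to0$.
   Context: Standing assumptions: $A>0$; $\Omega=\bigcup_{i=1}^m ]a_i,b_i[\subset\mathbb{R}$ with $a_1<b_1<a_2<\dots<a_m<b_m$; $R\in C^1(\overline\Omega\times[-A,A])$ with $\|R\|_{W^{1,\infty}(\Omega\times]-A,A[)}<C_R$ for a constant $C_R$; $K$ is a $C^1$ even function (defined on the differences $x-y$, $x,y\in\Omega$) with $K>0$, $0<c_K<K<C_K$ and $|K'|<C_K$ for constants $c_K,C_K$. For a function $\phi$ of $x\in\Omega$ (possibly depending on other variables) set $L\phi(x)=\int_\Omega[\phi(x)-\phi(y)]K(x-y)\,dy$. For $\theta\in[-A,A]$ and a bounded function $\rho$ on $\Omega$, $\lambda(\theta,\rho)$ is the principal eigenvalue (eigenvalue with a positive eigenfunction) of $\psi\mapsto-\psi''+L\psi-(R(\cdot,\theta)-\rho)\psi$ on $\Omega$ with Neumann boundary condition $\partial_\nu\psi=0$ on $\partial\Omega$. For $\varepsilon>0$, $\mu_\varepsilon$ is the principal eigenvalue of $\xi\mapsto-\partial_{xx}\xi-\varepsilon^2\partial_{\theta\theta}\xi+L\xi-R\xi$ on $\Omega\times]-A,A[$ with Neumann boundary conditions $\partial_{\nu_x}\xi=\partial_{\nu_\theta}\xi=0$ on $\partial(\Omega\times]-A,A[)$.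 *)

(* Defs.v *)
From Stdlib Require Import Reals Lra.
From Coquelicot Require Import Coquelicot.
Open Scope R_scope.

(* Omega = union_{i<m} ]a i, b i[ with a 0 < b 0 < a 1 < ... < b (m-1). *)
Definition intervals_ok (m : nat) (a b : nat -> R) : Prop :=
  (1 <= m)%nat /\
  (forall i, (i < m)%nat -> a i < b i) /\
  (forall i, (S i < m)%nat -> b i < a (S i)).

Definition inOmega (m : nat) (a b : nat -> R) (x : R) : Prop :=
  exists i, (i < m)%nat /\ a i < x < b i.

Definition inOmegaBar (m : nat) (a b : nat -> R) (x : R) : Prop :=
  exists i, (i < m)%nat /\ a i <= x <= b i.

Fixpoint intOmega (m : nat) (a b : nat -> R) (f : R -> R) : R :=
  match m with
  | O => 0
  | S k => intOmega k a b f + RInt f (a k) (b k)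
  end.

Definition Lop (m : nat) (a b : nat -> R) (K : R -> R) (phi : R -> R) (x : R) : R :=
  intOmega m a b (fun y => (phi x - phi y) * K (x - y)).

Definition dx (f : R -> R -> R) (x th : R) : R := Derive (fun y => f y th) x.
Definition dth (f : R -> R -> R) (x th : R) : R := Derive (fun t => f x t) th.
Definition dxx (f : R -> R -> R) (x th : R) : R := Derive_n (fun y => f y th) 2 x.
Definition dthth (f : R -> R -> R) (x th : R) : R := Derive_n (fun t => f x t) 2 th.

Definition cont2 (f : R -> R -> R) (x th : R) : Prop :=
  continuous (fun p : R * R => f (fst p) (snd p)) (x, th).

(* lam is the principal eigenvalue (eigenvalue with a positive classical
   eigenfunction) of psi |-> -psi'' + L psi - (Rf(.,th) - rho) psi on Omega
   with Neumann boundary conditions. *)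
Definition is_principal_eig1 (m : nat) (a b : nat -> R) (K : R -> R)
  (Rf : R -> R -> R) (th : R) (rho : R -> R) (lam : R) : Prop :=
  exists psi : R -> R,
    (forall x, inOmega m a b x -> 0 < psi x) /\
    (forall x, ex_derive psi x) /\
    (forall x, ex_derive (Derive psi) x) /\
    (forall x, inOmegaBar m a b x ->
       continuous psi x /\ continuous (Derive psi) x /\
       continuous (Derive_n psi 2) x) /\
    (forall x, inOmega m a b x ->
       - Derive_n psi 2 x + Lop m a b K psi x - (Rf x th - rho x) * psi x
       = lam * psi x) /\
    (forall i, (i < m)%nat -> Derive psi (a i) = 0 /\ Derive psi (b i) = 0).

Definition is_principal_eig2 (m : nat) (a b : nat -> R) (A : R) (K : R -> R)
  (Rf : R -> R -> R) (eps : R) (mu : R) : Prop :=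
  exists xi : R -> R -> R,
    (forall x th, inOmega m a b x -> -A < th < A -> 0 < xi x th) /\
    (forall x th, ex_derive (fun y => xi y th) x) /\
    (forall x th, ex_derive (fun y => dx xi y th) x) /\
    (forall x th, ex_derive (fun t => xi x t) th) /\
    (forall x th, ex_derive (fun t => dth xi x t) th) /\
    (forall x th, inOmegaBar m a b x -> -A <= th <= A ->
       cont2 xi x th /\ cont2 (dx xi) x th /\ cont2 (dth xi) x th /\
       cont2 (dxx xi) x th /\ cont2 (dthth xi) x th) /\
    (forall x th, inOmega m a b x -> -A < th < A ->
       - dxx xi x th - eps ^ 2 * dthth xi x th
       + Lop m a b K (fun y => xi y th) x - Rf x th * xi x th
       = mu * xi x th) /\
    (forall i th, (i < m)%nat -> -A <= th <= A ->
       dx xi (a i) th = 0 /\ dx xi (b i) th = 0) /\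
    (forall x, inOmegaBar m a b x -> dth xi x (-A) = 0 /\ dth xi x A = 0).

Definition R_ok (m : nat) (a b : nat -> R) (A : R) (Rf : R -> R -> R) (CR : R) : Prop :=
  (forall x th, ex_derive (fun y => Rf y th) x) /\
  (forall x th, ex_derive (fun t => Rf x t) th) /\
  (forall x th, inOmegaBar m a b x -> -A <= th <= A ->
     cont2 Rf x th /\ cont2 (dx Rf) x th /\ cont2 (dth Rf) x th) /\
  (forall x th, inOmega m a b x -> -A < th < A ->
     Rabs (Rf x th) < CR /\ Rabs (dx Rf x th) < CR /\ Rabs (dth Rf x th) < CR).

Definition K_ok (m : nat) (a b : nat -> R) (K : R -> R) (cK CK : R) : Prop :=
  (forall z, ex_derive K z) /\
  (forall z, continuous (Derive K) z) /\
  (forall z, K (- z) = K z) /\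
  0 < cK /\
  (forall x y, inOmega m a b x -> inOmega m a b y ->
     cK < K (x - y) < CK /\ Rabs (Derive K (x - y)) < CK).

(* Main.v *)
Require Import Defs.
From Stdlib Require Import Reals Lra Lia Rtopology ClassicalEpsilon Classical.
From Coquelicot Require Import Coquelicot.
Open Scope R_scope.

Lemma cont_ed (f : R -> R) (x : R) :
  continuous f x <-> forall eps, 0 < eps -> exists del, 0 < del /\
     forall y, Rabs (y - x) < del -> Rabs (f y - f x) < eps.
Proof.
  split.
  - intros H eps Heps. apply continuity_pt_filterlim in H.
    destruct (H eps Heps) as [del [Hd Hy]]. exists del; split; auto.
    intros y Hyx. destruct (Req_dec y x) as [->|Hne].
    + rewrite Rminus_diag, Rabs_R0; auto.
    + apply (Hy y). split. split; [exact I|auto]. exact Hyx.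
  - intros H. apply continuity_pt_filterlim. intros eps Heps.
    destruct (H eps Heps) as [del [Hd Hy]]. exists del; split; auto.
    intros y [_ Hyx]. apply Hy. exact Hyx.
Qed.

Lemma c2_ed (f : R -> R -> R) x y :
  continuity_2d_pt f x y <-> forall eps, 0 < eps -> exists del, 0 < del /\
    forall u v, Rabs (u - x) < del -> Rabs (v - y) < del -> Rabs (f u v - f x y) < eps.
Proof.
  split.
  - intros H eps Heps. destruct (H (mkposreal eps Heps)) as [d Hd].
    exists d; split; [apply cond_pos|]. intros; apply Hd; auto.
  - intros H eps. destruct (H eps (cond_pos eps)) as [d [Hd0 Hd]].
    exists (mkposreal d Hd0). intros; apply Hd; auto.
Qed.

Lemma cont2_c2 F x th : cont2 F x th -> continuity_2d_pt F x th.
Proof. intros H; apply continuity_2d_pt_filterlim; exact H. Qed.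

Lemma c2_swap f x y : continuity_2d_pt f x y -> continuity_2d_pt (fun u v => f v u) y x.
Proof.
  rewrite !c2_ed. intros H eps Heps. destruct (H eps Heps) as [d [Hd H1]].
  exists d; split; auto.
Qed.

Lemma c2_x f x y : continuity_2d_pt f x y -> continuous (fun u => f u y) x.
Proof.
  rewrite c2_ed, cont_ed. intros H eps Heps. destruct (H eps Heps) as [d [Hd H1]].
  exists d; split; auto. intros u Hu. apply H1; auto. rewrite Rminus_diag, Rabs_R0; auto.
Qed.

Lemma c2_y f x y : continuity_2d_pt f x y -> continuous (fun v => f x v) y.
Proof.
  rewrite c2_ed, cont_ed. intros H eps Heps. destruct (H eps Heps) as [d [Hd H1]].
  exists d; split; auto. intros u Hu. apply H1; auto. rewrite Rminus_diag, Rabs_R0; auto.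
Qed.

Lemma c2_fst (g : R -> R) x y : continuous g x -> continuity_2d_pt (fun u v => g u) x y.
Proof.
  rewrite c2_ed, cont_ed. intros H eps Heps. destruct (H eps Heps) as [d [Hd H1]].
  exists d; split; auto.
Qed.

Lemma c2_snd (g : R -> R) x y : continuous g y -> continuity_2d_pt (fun u v => g v) x y.
Proof.
  rewrite c2_ed, cont_ed. intros H eps Heps. destruct (H eps Heps) as [d [Hd H1]].
  exists d; split; auto.
Qed.

Lemma c2_diff (g : R -> R) x y : continuous g (x - y) -> continuity_2d_pt (fun u v => g (u - v)) x y.
Proof.
  rewrite c2_ed, cont_ed. intros H eps Heps. destruct (H eps Heps) as [d [Hd H1]].
  exists (d/2); split; [lra|]. intros u v Hu Hv. apply H1.
  replace (u - v - (x - y)) with ((u - x) - (v - y)) by ring.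
  eapply Rle_lt_trans; [apply Rabs_triang|]. rewrite Rabs_Ropp. lra.
Qed.

Lemma c2_mult f g x y : continuity_2d_pt f x y -> continuity_2d_pt g x y ->
  continuity_2d_pt (fun u v => f u v * g u v) x y.
Proof. apply continuity_2d_pt_mult. Qed.
Lemma c2_plus f g x y : continuity_2d_pt f x y -> continuity_2d_pt g x y ->
  continuity_2d_pt (fun u v => f u v + g u v) x y.
Proof. apply continuity_2d_pt_plus. Qed.
Lemma c2_minus f g x y : continuity_2d_pt f x y -> continuity_2d_pt g x y ->
  continuity_2d_pt (fun u v => f u v - g u v) x y.
Proof. apply continuity_2d_pt_minus. Qed.

Lemma cR_mult (f g : R -> R) x : continuous f x -> continuous g x -> continuous (fun y => f y * g y) x.
Proof. intros; apply (continuous_mult f g); auto. Qed.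
Lemma cR_plus (f g : R -> R) x : continuous f x -> continuous g x -> continuous (fun y => f y + g y) x.
Proof. intros; apply (continuous_plus f g); auto. Qed.
Lemma cR_minus (f g : R -> R) x : continuous f x -> continuous g x -> continuous (fun y => f y - g y) x.
Proof. intros; apply (continuous_minus f g); auto. Qed.
Lemma cR_opp (f : R -> R) x : continuous f x -> continuous (fun y => - f y) x.
Proof. intros; apply (continuous_opp f); auto. Qed.
Lemma cR_const (c : R) (x : R) : continuous (fun _ : R => c) x.
Proof. apply continuous_const. Qed.
Lemma cR_scal (c : R) (f : R -> R) x : continuous f x -> continuous (fun y => c * f y) x.
Proof. intros; apply cR_mult; auto; apply cR_const. Qed.

Lemma exd_cont (f : R -> R) x : ex_derive f x -> continuous f x.
Proof. intros H; apply (ex_derive_continuous (K:=R_AbsRing) (V:=R_NormedModule)); exact H. Qed.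

Lemma mono (f df : R -> R) a b : a <= b ->
  (forall x, a < x < b -> is_derive f x (df x)) ->
  (forall x, a <= x <= b -> continuous f x) ->
  (forall x, a < x < b -> 0 <= df x) -> f a <= f b.
Proof.
  intros Hab Hd Hc Hp.
  destruct (Req_dec a b) as [->|Hne]; [lra|].
  assert (pr1 : forall c, a < c < b -> derivable_pt f c).
  { intros c Hc'. exists (df c). apply is_derive_Reals. auto. }
  assert (pr2 : forall c, a < c < b -> derivable_pt id c).
  { intros c _. apply derivable_pt_id. }
  destruct (MVT f id a b pr1 pr2) as [c [P HP]].
  - lra.
  - intros; apply continuity_pt_filterlim; apply Hc; auto.
  - intros c0 _; apply (derivable_continuous_pt id c0); apply derivable_pt_id.
  - rewrite (derive_pt_eq_0 f c (df c) (pr1 c P)) in HP.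
    2: { apply is_derive_Reals; auto. }
    rewrite (derive_pt_eq_0 id c 1 (pr2 c P)) in HP.
    2: { apply derivable_pt_lim_id. }
    unfold id in HP. specialize (Hp c P). nra.
Qed.

Definition WC (D : R -> Prop) (F : R -> R) (s0 : R) : Prop :=
  forall eps, 0 < eps -> exists del, 0 < del /\
    forall s, D s -> Rabs (s - s0) < del -> Rabs (F s - F s0) < eps.

Lemma RInt_minusR (f g : R -> R) a b : ex_RInt f a b -> ex_RInt g a b ->
  RInt (fun x => f x - g x) a b = RInt f a b - RInt g a b.
Proof. intros; apply (RInt_minus f g); auto. Qed.
Lemma RInt_plusR (f g : R -> R) a b : ex_RInt f a b -> ex_RInt g a b ->
  RInt (fun x => f x + g x) a b = RInt f a b + RInt g a b.
Proof. intros; apply (RInt_plus f g); auto. Qed.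
Lemma RInt_scalR (f : R -> R) k a b : ex_RInt f a b ->
  RInt (fun x => k * f x) a b = k * RInt f a b.
Proof. intros; apply (RInt_scal f); auto. Qed.
Lemma RInt_zeroR a b : RInt (fun _ => 0) a b = 0.
Proof. rewrite RInt_const. unfold scal; simpl; unfold mult; simpl. ring. Qed.
Lemma ex_RInt_minusR (f g : R -> R) a b : ex_RInt f a b -> ex_RInt g a b ->
  ex_RInt (fun x => f x - g x) a b.
Proof. intros; apply (ex_RInt_minus f g); auto. Qed.
Lemma ex_RInt_plusR (f g : R -> R) a b : ex_RInt f a b -> ex_RInt g a b ->
  ex_RInt (fun x => f x + g x) a b.
Proof. intros; apply (ex_RInt_plus f g); auto. Qed.

Lemma ex_RInt_cont (f : R -> R) a b : a <= b -> (forall x, a <= x <= b -> continuous f x) ->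
  ex_RInt f a b.
Proof. intros Hab H; apply (ex_RInt_continuous (V:=R_CompleteNormedModule)); rewrite Rmin_left, Rmax_right by lra; auto. Qed.

Lemma PC (g : R -> R -> R) (D : R -> Prop) c d s0 : c <= d -> D s0 ->
  (forall y, c <= y <= d -> continuity_2d_pt g s0 y) ->
  (forall s, D s -> ex_RInt (g s) c d) ->
  WC D (fun s => RInt (g s) c d) s0.
Proof.
  intros Hcd HD Hc Hex eps Heps.
  set (e := eps / (2 * (d - c + 1))).
  assert (He : 0 < e) by (unfold e; apply Rdiv_lt_0_compat; lra).
  assert (Hdel : forall y, {del : posreal | c <= y <= d -> forall u v, Rabs (u - s0) < del ->
       Rabs (v - y) < del -> Rabs (g u v - g s0 y) < e}).
  { intros y. apply constructive_indefinite_description.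
    destruct (classic (c <= y <= d)) as [Hy|Hy].
    - destruct (proj1 (c2_ed _ _ _) (Hc y Hy) e He) as [dl [Hdl H]].
      exists (mkposreal dl Hdl). auto.
    - exists (mkposreal 1 Rlt_0_1). intros; contradiction. }
  set (del := fun y => proj1_sig (Hdel y)).
  destruct (compactness_value_1d c d del) as [dd Hdd].
  exists dd. split; [apply cond_pos|]. intros s Hs Hss0.
  rewrite <- RInt_minusR by auto.
  eapply Rle_lt_trans.
  - apply (abs_RInt_le_const _ c d (2 * e)); auto.
    + apply ex_RInt_minusR; auto.
    + intros y Hy. apply Rnot_lt_le; intro Hlt. apply (Hdd y Hy).
      intros [t [Ht [Hyt Hdt]]].
      pose proof (proj2_sig (Hdel t) Ht) as Hk. fold (del t) in Hk.
      assert (H1 : Rabs (g s y - g s0 t) < e) by (apply Hk; lra).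
      assert (H2 : Rabs (g s0 y - g s0 t) < e).
      { apply Hk; auto. rewrite Rminus_diag, Rabs_R0. apply cond_pos. }
      assert (Rabs (g s y - g s0 y) < 2 * e).
      { replace (g s y - g s0 y) with ((g s y - g s0 t) - (g s0 y - g s0 t)) by ring.
        eapply Rle_lt_trans; [apply Rabs_triang|]. rewrite Rabs_Ropp. lra. }
      lra.
  - unfold e. apply Rminus_gt_0_lt.
    replace (eps - (d - c) * (2 * (eps / (2 * (d - c + 1)))))
      with (eps / (d - c + 1)) by (field; lra).
    apply Rdiv_lt_0_compat; lra.
Qed.

Lemma WC_cont F s0 : WC (fun _ => True) F s0 -> continuous F s0.
Proof.
  intros H. apply cont_ed. intros eps Heps. destruct (H eps Heps) as [d [Hd H1]].
  exists d; split; auto.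
Qed.

Lemma WC_plus D F G s0 : WC D F s0 -> WC D G s0 -> WC D (fun s => F s + G s) s0.
Proof.
  intros HF HG eps Heps. destruct (HF (eps/2)) as [d1 [Hd1 H1]]; [lra|].
  destruct (HG (eps/2)) as [d2 [Hd2 H2]]; [lra|].
  exists (Rmin d1 d2); split; [apply Rmin_pos; auto|].
  intros s Hs Hss. specialize (H1 s Hs). specialize (H2 s Hs).
  assert (Rabs (s - s0) < d1) by (eapply Rlt_le_trans; [apply Hss|apply Rmin_l]).
  assert (Rabs (s - s0) < d2) by (eapply Rlt_le_trans; [apply Hss|apply Rmin_r]).
  replace (F s + G s - (F s0 + G s0)) with ((F s - F s0) + (G s - G s0)) by ring.
  eapply Rle_lt_trans; [apply Rabs_triang|]. specialize (H1 H). specialize (H2 H0). lra.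
Qed.

Lemma WC_const D c s0 : WC D (fun _ => c) s0.
Proof. intros eps Heps; exists 1; split; [lra|]. intros; rewrite Rminus_diag, Rabs_R0; auto. Qed.

Definition ordI (m : nat) (a b : nat -> R) := forall i, (i < m)%nat -> a i < b i.
Definition IE (m : nat) (a b : nat -> R) (f : R -> R) := forall i, (i < m)%nat -> ex_RInt f (a i) (b i).
Definition CB (m : nat) (a b : nat -> R) (f : R -> R) :=
  forall i, (i < m)%nat -> forall x, a i <= x <= b i -> continuous f x.
Definition CE (f : R -> R) := forall x, continuous f x.
Definition G2 (g : R -> R -> R) := forall x y, continuity_2d_pt g x y.

Lemma CB_IE m a b f : ordI m a b -> CB m a b f -> IE m a b f.
Proof. intros Ho Hc i Hi. apply ex_RInt_cont; [apply Rlt_le; auto|]. apply Hc; auto. Qed.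
Lemma CE_CB m a b f : CE f -> CB m a b f.
Proof. intros H i _ x _; auto. Qed.

Lemma intO_WC m a b (g : R -> R -> R) D s0 : ordI m a b -> D s0 ->
  (forall i, (i < m)%nat -> forall y, a i <= y <= b i -> continuity_2d_pt g s0 y) ->
  (forall s, D s -> IE m a b (g s)) ->
  WC D (fun s => intOmega m a b (g s)) s0.
Proof.
  intros Ho HD Hc Hie. induction m as [|k IH]; simpl.
  - apply WC_const.
  - apply WC_plus.
    + apply IH.
      * intros i Hi; apply Ho; lia.
      * intros i Hi y Hy; apply (Hc i); auto; lia.
      * intros s Hs i Hi; apply (Hie s Hs i); lia.
    + apply PC; auto.
      * apply Rlt_le, Ho; lia.
      * intros y Hy; apply (Hc k); auto.
      * intros s Hs; apply (Hie s Hs k); auto.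
Qed.

Lemma G2_CE_int m a b g : ordI m a b -> G2 g -> CE (fun x => intOmega m a b (g x)).
Proof.
  intros Ho Hg x. apply WC_cont. apply intO_WC; auto.
  intros s _ i Hi. apply ex_RInt_cont; [apply Rlt_le; auto|].
  intros y _. apply (c2_y g s y); auto.
Qed.

Lemma G2_CE_RInt g c d : c <= d -> G2 g -> CE (fun x => RInt (g x) c d).
Proof.
  intros Hcd Hg x. apply WC_cont. apply PC; auto.
  intros s _. apply ex_RInt_cont; auto. intros y _. apply (c2_y g s y); auto.
Qed.

Lemma intO_plus m a b f g : IE m a b f -> IE m a b g ->
  intOmega m a b (fun x => f x + g x) = intOmega m a b f + intOmega m a b g.
Proof.
  intros Hf Hg; induction m as [|k IH]; simpl; [ring|].
  rewrite IH by (intros i Hi; first [apply Hf|apply Hg]; lia). rewrite RInt_plusR by auto. ring.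
Qed.
Lemma intO_minus m a b f g : IE m a b f -> IE m a b g ->
  intOmega m a b (fun x => f x - g x) = intOmega m a b f - intOmega m a b g.
Proof.
  intros Hf Hg; induction m as [|k IH]; simpl; [ring|].
  rewrite IH by (intros i Hi; first [apply Hf|apply Hg]; lia). rewrite RInt_minusR by auto. ring.
Qed.
Lemma intO_scal m a b f k : IE m a b f ->
  intOmega m a b (fun x => k * f x) = k * intOmega m a b f.
Proof.
  intros Hf; induction m as [|j IH]; simpl; [ring|].
  rewrite IH by (intros i Hi; apply Hf; lia). rewrite RInt_scalR by auto. ring.
Qed.
Lemma intO_ext m a b f g : ordI m a b ->
  (forall i, (i < m)%nat -> forall x, a i < x < b i -> f x = g x) ->
  intOmega m a b f = intOmega m a b g.
Proof.
  intros Ho H; induction m as [|k IH]; simpl; [ring|].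
  rewrite IH; [| intros i Hi; apply Ho; lia | intros i Hi; apply (H i); lia].
  f_equal. apply RInt_ext. rewrite Rmin_left, Rmax_right by (apply Rlt_le, Ho; lia).
  intros; apply (H k); auto.
Qed.
Lemma intO_zero m a b : intOmega m a b (fun _ => 0) = 0.
Proof. induction m; simpl; [ring|]. rewrite IHm, RInt_zeroR; ring. Qed.
Lemma intO_le m a b f g : ordI m a b -> IE m a b f -> IE m a b g ->
  (forall i, (i < m)%nat -> forall x, a i < x < b i -> f x <= g x) ->
  intOmega m a b f <= intOmega m a b g.
Proof.
  intros Ho Hf Hg H; induction m as [|k IH]; simpl; [lra|].
  apply Rplus_le_compat.
  - apply IH; intros i Hi; [apply Ho|apply Hf|apply Hg|apply (H i)]; lia.
  - apply RInt_le; auto. apply Rlt_le, Ho; lia. intros; apply (H k); auto.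
Qed.
Lemma intO_pos m a b f : (1 <= m)%nat -> ordI m a b -> CB m a b f ->
  (forall i, (i < m)%nat -> forall x, a i < x < b i -> 0 < f x) ->
  0 < intOmega m a b f.
Proof.
  intros Hm Ho Hc H. destruct m as [|k]; [lia|]. simpl.
  apply Rplus_le_lt_0_compat.
  - rewrite <- (intO_zero k a b). apply intO_le.
    + intros i Hi; apply Ho; lia.
    + intros i Hi. apply ex_RInt_const.
    + apply CB_IE; intros i Hi; [apply Ho|apply (Hc i)]; lia.
    + intros i Hi x Hx. apply Rlt_le, (H i); auto.
  - apply RInt_gt_0; auto. intros; apply (H k); auto. intros; apply (Hc k); auto.
Qed.

Lemma G2_swap g : G2 g -> G2 (fun u v => g v u).
Proof. intros H x y; apply c2_swap; auto. Qed.

Lemma ex_RInt_CE (f : R -> R) p q : CE f -> ex_RInt f p q.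
Proof. intros H; apply (ex_RInt_continuous (V:=R_CompleteNormedModule)); intros; apply H. Qed.

Lemma G2_CE_RInt_any g p q : G2 g -> CE (fun y => RInt (fun x => g x y) p q).
Proof.
  intros Hg. destruct (Rle_lt_dec p q) as [Hpq|Hpq].
  - apply (G2_CE_RInt (fun y x => g x y)); auto. apply G2_swap; auto.
  - intros y.
    apply (continuous_ext (fun y => - RInt (fun x => g x y) q p)).
    + intros z. symmetry. rewrite <- (opp_RInt_swap (V:=R_CompleteNormedModule)).
      reflexivity. apply ex_RInt_CE. intros x; apply (c2_x g x z); auto.
    + apply cR_opp. apply (G2_CE_RInt (fun y x => g x y)); [lra|]. apply G2_swap; auto.
Qed.

Lemma is_derive_RInt_upper (f : R -> R) p s : CE f -> is_derive (fun u => RInt f p u) s (f s).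
Proof.
  intros Hf. apply (is_derive_RInt f (fun u => RInt f p u) p s).
  - apply filter_forall. intros b0. apply (RInt_correct (V:=R_CompleteNormedModule)). apply ex_RInt_CE; auto.
  - apply Hf.
Qed.

Lemma fubini g a b c d : a <= b -> c <= d -> G2 g ->
  RInt (fun x => RInt (fun y => g x y) c d) a b = RInt (fun y => RInt (fun x => g x y) a b) c d.
Proof.
  intros Hab Hcd Hg.
  set (Phi := fun x => RInt (fun y => g x y) c d).
  assert (HPhi : CE Phi) by (apply G2_CE_RInt; auto).
  set (P := fun s => RInt Phi a s).
  set (Q := fun s => RInt (fun y => RInt (fun x => g x y) a s) c d).
  assert (HP : forall s, is_derive P s (Phi s)).
  { intros s. apply is_derive_RInt_upper; auto. }
  assert (HQ : forall s, is_derive Q s (Phi s)).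
  { intros s. unfold Q.
    assert (E : Phi s = RInt (fun t => Derive (fun u => RInt (fun x => g x t) a u) s) c d).
    { unfold Phi. apply RInt_ext. intros t _. symmetry. apply is_derive_unique.
      apply (is_derive_RInt_upper (fun x => g x t)). intros x; apply (c2_x g x t); auto. }
    rewrite E.
    apply (is_derive_RInt_param (fun u t => RInt (fun x => g x t) a u) c d s).
    - apply filter_forall. intros x0 t _. eexists. apply (is_derive_RInt_upper (fun x => g x t)).
      intros x; apply (c2_x g x t); auto.
    - intros t _. apply (continuity_2d_pt_ext g).
      + intros u v. symmetry. apply is_derive_unique. apply (is_derive_RInt_upper (fun x => g x v)).
        intros x; apply (c2_x g x v); auto.
      + apply Hg.
    - apply filter_forall. intros y. apply ex_RInt_CE. apply G2_CE_RInt_any; auto. }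
  assert (HPQ : forall s, is_derive (fun s => P s - Q s) s 0).
  { intros s. replace 0 with (Phi s - Phi s) by ring.
    apply (is_derive_minus P Q); auto. }
  destruct (MVT_gen (fun s => P s - Q s) a b (fun _ => 0)) as [c0 [_ Hc0]].
  - intros; apply HPQ.
  - intros x _. apply continuity_pt_filterlim.
    apply (ex_derive_continuous (K:=R_AbsRing) (V:=R_NormedModule) (fun s => P s - Q s)). eexists; apply HPQ.
  - assert (P a = 0) by (unfold P; apply (RInt_point (V:=R_CompleteNormedModule))).
    assert (Q a = 0).
    { unfold Q. rewrite <- (RInt_zeroR c d). apply RInt_ext. intros; apply (RInt_point (V:=R_CompleteNormedModule)). }
    unfold P, Q in *. lra.
Qed.

Lemma CE_IE m a b f : ordI m a b -> CE f -> IE m a b f.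
Proof. intros; apply CB_IE; auto; apply CE_CB; auto. Qed.

Lemma intO_RInt_swap m a b g c d : ordI m a b -> c <= d -> G2 g ->
  intOmega m a b (fun x => RInt (fun y => g x y) c d) =
  RInt (fun y => intOmega m a b (fun x => g x y)) c d.
Proof.
  intros Ho Hcd Hg. induction m as [|k IH]; simpl.
  - symmetry; apply RInt_zeroR.
  - rewrite IH by (intros i Hi; apply Ho; lia).
    rewrite fubini; auto; [|apply Rlt_le, Ho; lia].
    rewrite RInt_plusR; auto.
    + apply ex_RInt_CE. apply (G2_CE_int k a b (fun y x => g x y)).
      intros i Hi; apply Ho; lia. apply G2_swap; auto.
    + apply ex_RInt_CE. apply G2_CE_RInt_any; auto.
Qed.

Lemma intO_swap m a b n a' b' g : ordI m a b -> ordI n a' b' -> G2 g ->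
  intOmega m a b (fun x => intOmega n a' b' (fun y => g x y)) =
  intOmega n a' b' (fun y => intOmega m a b (fun x => g x y)).
Proof.
  intros Ho Ho' Hg. induction n as [|k IH]; simpl.
  - apply intO_zero.
  - rewrite intO_plus.
    + rewrite IH by (intros i Hi; apply Ho'; lia).
      rewrite intO_RInt_swap; auto. apply Rlt_le, Ho'; lia.
    + apply CE_IE; auto. apply (G2_CE_int k a' b' g); auto. intros i Hi; apply Ho'; lia.
    + apply CE_IE; auto. apply G2_CE_RInt; auto. apply Rlt_le, Ho'; lia.
Qed.

Lemma G2_L (f K : R -> R) : CE f -> CE K -> G2 (fun x y => (f x - f y) * K (x - y)).
Proof.
  intros Hf HK x y. apply c2_mult.
  - apply c2_minus; [apply c2_fst|apply c2_snd]; auto.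
  - apply c2_diff; auto.
Qed.

Lemma CE_Lint (f K : R -> R) x : CE f -> CE K -> CE (fun y => (f x - f y) * K (x - y)).
Proof. intros Hf HK y. apply (c2_y (fun x y => (f x - f y) * K (x - y)) x y). apply G2_L; auto. Qed.

Lemma CE_mult f g : CE f -> CE g -> CE (fun x => f x * g x).
Proof. intros Hf Hg x; apply cR_mult; auto. Qed.
Lemma CE_Kd1 (K : R -> R) x : CE K -> CE (fun y => K (x - y)).
Proof. intros HK y. apply (c2_y (fun x y => K (x - y)) x y). apply c2_diff; auto. Qed.
Lemma CE_Kd2 (K : R -> R) x : CE K -> CE (fun y => K (y - x)).
Proof. intros HK y. apply (c2_x (fun y x => K (y - x)) y x). apply c2_diff; auto. Qed.
Lemma CE_const c : CE (fun _ => c).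
Proof. intros x; apply cR_const. Qed.

Ltac ce := repeat (first [ apply CE_mult | apply CE_const | apply CE_Kd1 | apply CE_Kd2 | assumption ]).

Lemma CE_Lop m a b K f : ordI m a b -> CE f -> CE K -> CE (Lop m a b K f).
Proof. intros Ho Hf HK. unfold Lop. apply (G2_CE_int m a b (fun x y => (f x - f y) * K (x - y))); auto.
  apply G2_L; auto. Qed.


Lemma Lsym m a b K psi f : ordI m a b -> CE psi -> CE f -> CE K -> (forall z, K (- z) = K z) ->
  intOmega m a b (fun x => psi x * Lop m a b K f x) =
  intOmega m a b (fun x => f x * Lop m a b K psi x).
Proof.
  intros Ho Hp Hf HK Hev.
  set (G := fun x y => f x * psi y * K (x - y)).
  assert (HG : G2 G).
  { intros x y. unfold G. apply c2_mult; [apply c2_mult|].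
    apply c2_fst; auto. apply c2_snd; auto. apply c2_diff; auto. }
  assert (HGs : G2 (fun x y => G y x)) by (apply G2_swap; auto).
  assert (Hpt : forall x, psi x * Lop m a b K f x - f x * Lop m a b K psi x =
     intOmega m a b (fun y => G x y) - intOmega m a b (fun y => G y x)).
  { intros x. unfold Lop.
    rewrite <- !intO_scal by (apply CE_IE; auto; apply CE_Lint; auto).
    rewrite <- !intO_minus.
    - apply intO_ext; auto. intros i Hi y _. unfold G.
      replace (y - x) with (- (x - y)) by ring. rewrite Hev. ring.
    all: apply CE_IE; auto; unfold G.
    all: first [ apply CE_mult; [apply CE_const|apply CE_Lint; auto] | ce ]. }
  apply Rminus_diag_uniq.
  rewrite <- intO_minus.
  - rewrite (intO_ext m a b _ (fun x => intOmega m a b (fun y => G x y) - intOmega m a b (fun y => G y x))); auto.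
    rewrite intO_minus.
    + rewrite (intO_swap m a b m a b (fun x y => G y x)); auto. ring.
    + apply CE_IE; auto. apply G2_CE_int; auto.
    + apply CE_IE; auto. apply (G2_CE_int m a b (fun x y => G y x)); auto.
  - apply CE_IE; auto. apply CE_mult; auto. apply CE_Lop; auto.
  - apply CE_IE; auto. apply CE_mult; auto. apply CE_Lop; auto.
Qed.

Lemma ibp (psi f : R -> R) p q : p <= q ->
  (forall x, ex_derive psi x) -> (forall x, ex_derive (Derive psi) x) ->
  (forall x, ex_derive f x) -> (forall x, ex_derive (Derive f) x) ->
  (forall x, p <= x <= q -> continuous (Derive (Derive psi)) x) ->
  (forall x, p <= x <= q -> continuous (Derive (Derive f)) x) ->
  Derive psi p = 0 -> Derive psi q = 0 -> Derive f p = 0 -> Derive f q = 0 ->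
  RInt (fun x => psi x * (- Derive (Derive f) x)) p q =
  RInt (fun x => (- Derive (Derive psi) x) * f x) p q.
Proof.
  intros Hpq H1 H2 H3 H4 C1 C2 E1 E2 E3 E4.
  set (W := fun x => Derive psi x * f x - psi x * Derive f x).
  set (dW := fun x => Derive (Derive psi) x * f x - psi x * Derive (Derive f) x).
  assert (HW : forall x, is_derive W x (dW x)).
  { intros x. unfold W, dW. auto_derive.
    - repeat split; auto.
    - change (fun x0 : R => f x0) with f; change (fun x0 : R => psi x0) with psi;
      change (fun x0 : R => Derive psi x0) with (Derive psi);
      change (fun x0 : R => Derive f x0) with (Derive f). ring. }
  assert (HI : is_RInt dW p q (minus (W q) (W p))).
  { apply (is_RInt_derive (V:=R_CompleteNormedModule)).
    - intros; apply HW.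
    - rewrite Rmin_left, Rmax_right by lra. intros x Hx. unfold dW.
      apply cR_minus; apply cR_mult; auto.
      + apply exd_cont; auto.
      + apply exd_cont; auto. }
  assert (HW0 : minus (W q) (W p) = 0).
  { unfold W, minus, plus, opp; simpl. rewrite E1, E2, E3, E4. ring. }
  rewrite HW0 in HI.
  apply Rminus_diag_uniq. rewrite <- RInt_minusR.
  - rewrite (RInt_ext _ dW). apply (is_RInt_unique (V:=R_CompleteNormedModule)); auto.
    intros x _. unfold dW. change (psi x * - Derive (Derive f) x - - Derive (Derive psi) x * f x = Derive (Derive psi) x * f x - psi x * Derive (Derive f) x). ring.
  - apply ex_RInt_cont; auto. intros x Hx. apply cR_mult; [apply exd_cont; auto|].
    apply cR_opp; auto.
  - apply ex_RInt_cont; auto. intros x Hx. apply cR_mult; [|apply exd_cont; auto].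
    apply cR_opp; auto.
Qed.

Lemma intO_ibp m a b (psi f : R -> R) : ordI m a b ->
  (forall x, ex_derive psi x) -> (forall x, ex_derive (Derive psi) x) ->
  (forall x, ex_derive f x) -> (forall x, ex_derive (Derive f) x) ->
  (forall i, (i < m)%nat -> forall x, a i <= x <= b i ->
     continuous (Derive (Derive psi)) x /\ continuous (Derive (Derive f)) x) ->
  (forall i, (i < m)%nat -> Derive psi (a i) = 0 /\ Derive psi (b i) = 0 /\
     Derive f (a i) = 0 /\ Derive f (b i) = 0) ->
  intOmega m a b (fun x => psi x * (- Derive (Derive f) x)) =
  intOmega m a b (fun x => (- Derive (Derive psi) x) * f x).
Proof.
  intros Ho H1 H2 H3 H4 HC HN. induction m as [|k IH]; simpl; [reflexivity|].
  rewrite IH.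
  - f_equal. destruct (HN k) as [? [? [? ?]]]; [lia|].
    apply ibp; try assumption. apply Rlt_le, Ho; lia.
    intros x Hx; exact (proj1 (HC k (Nat.lt_succ_diag_r k) x Hx)).
    intros x Hx; exact (proj2 (HC k (Nat.lt_succ_diag_r k) x Hx)).
  - intros i Hi; apply Ho; lia.
  - intros i Hi; apply (HC i); lia.
  - intros i Hi; apply (HN i); lia.
Qed.


Lemma intO_derive m a b (G : R -> R -> R) th : ordI m a b ->
  (forall t x, ex_derive (fun u => G u x) t) ->
  (forall i, (i < m)%nat -> forall x, a i <= x <= b i ->
     continuity_2d_pt (fun u v => Derive (fun z => G z v) u) th x) ->
  locally th (fun t => IE m a b (G t)) ->
  is_derive (fun t => intOmega m a b (G t)) th
            (intOmega m a b (fun x => Derive (fun u => G u x) th)).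
Proof.
  intros Ho Hd Hc Hl. induction m as [|k IH].
  - simpl. apply (is_derive_const (K:=R_AbsRing) (V:=R_NormedModule) 0).
  - assert (Hk : a k < b k) by (apply Ho; lia).
    assert (D1 : is_derive (fun t => intOmega k a b (G t)) th
            (intOmega k a b (fun x => Derive (fun u => G u x) th))).
    { apply IH.
      * intros i Hi; apply Ho; lia.
      * intros i Hi; apply Hc; lia.
      * eapply filter_imp; [|apply Hl]. intros t H i Hi; apply H; lia. }
    assert (D2 : is_derive (fun t => RInt (G t) (a k) (b k)) th
         (RInt (fun x => Derive (fun u => G u x) th) (a k) (b k))).
    { apply (is_derive_RInt_param G (a k) (b k) th).
      * apply filter_forall. intros; apply Hd.
      * rewrite Rmin_left, Rmax_right by lra. intros; apply (Hc k); auto.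
      * eapply filter_imp; [|apply Hl]. intros t H; apply H; lia. }
    exact (is_derive_plus _ _ th _ _ D1 D2).
Qed.

Definition EIG1 (m : nat) (a b : nat -> R) (K : R -> R)
  (Rf : R -> R -> R) (th : R) (lam : R) (psi : R -> R) : Prop :=
    (forall x, inOmega m a b x -> 0 < psi x) /\
    (forall x, ex_derive psi x) /\
    (forall x, ex_derive (Derive psi) x) /\
    (forall x, inOmegaBar m a b x ->
       continuous psi x /\ continuous (Derive psi) x /\
       continuous (Derive_n psi 2) x) /\
    (forall x, inOmega m a b x ->
       - Derive_n psi 2 x + Lop m a b K psi x - (Rf x th - (fun _ => 0) x) * psi x
       = lam * psi x) /\
    (forall i, (i < m)%nat -> Derive psi (a i) = 0 /\ Derive psi (b i) = 0).

Definition EIG2 (m : nat) (a b : nat -> R) (A : R) (K : R -> R)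
  (Rf : R -> R -> R) (eps : R) (mu : R) (xi : R -> R -> R) : Prop :=
    (forall x th, inOmega m a b x -> -A < th < A -> 0 < xi x th) /\
    (forall x th, ex_derive (fun y => xi y th) x) /\
    (forall x th, ex_derive (fun y => dx xi y th) x) /\
    (forall x th, ex_derive (fun t => xi x t) th) /\
    (forall x th, ex_derive (fun t => dth xi x t) th) /\
    (forall x th, inOmegaBar m a b x -> -A <= th <= A ->
       cont2 xi x th /\ cont2 (dx xi) x th /\ cont2 (dth xi) x th /\
       cont2 (dxx xi) x th /\ cont2 (dthth xi) x th) /\
    (forall x th, inOmega m a b x -> -A < th < A ->
       - dxx xi x th - eps ^ 2 * dthth xi x th
       + Lop m a b K (fun y => xi y th) x - Rf x th * xi x th
       = mu * xi x th) /\
    (forall i th, (i < m)%nat -> -A <= th <= A ->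
       dx xi (a i) th = 0 /\ dx xi (b i) th = 0) /\
    (forall x, inOmegaBar m a b x -> dth xi x (-A) = 0 /\ dth xi x A = 0).

Lemma eig1_unfold m a b K Rf th lam :
  is_principal_eig1 m a b K Rf th (fun _ => 0) lam -> exists psi, EIG1 m a b K Rf th lam psi.
Proof. intros H; exact H. Qed.
Lemma eig2_unfold m a b A K Rf eps mu :
  is_principal_eig2 m a b A K Rf eps mu -> exists xi, EIG2 m a b A K Rf eps mu xi.
Proof. intros H; exact H. Qed.

Lemma inBar m a b i x : (i < m)%nat -> a i <= x <= b i -> inOmegaBar m a b x.
Proof. intros; exists i; auto. Qed.
Lemma inOp m a b i x : (i < m)%nat -> a i < x < b i -> inOmega m a b x.
Proof. intros; exists i; auto. Qed.

Lemma ord_of m a b : intervals_ok m a b -> ordI m a b.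
Proof. intros [_ [H _]]; exact H. Qed.

Lemma CB_mult m a b f g : CB m a b f -> CB m a b g -> CB m a b (fun x => f x * g x).
Proof. intros Hf Hg i Hi x Hx; apply cR_mult; [apply (Hf i)|apply (Hg i)]; auto. Qed.
Lemma CB_plus m a b f g : CB m a b f -> CB m a b g -> CB m a b (fun x => f x + g x).
Proof. intros Hf Hg i Hi x Hx; apply cR_plus; [apply (Hf i)|apply (Hg i)]; auto. Qed.
Lemma CB_minus m a b f g : CB m a b f -> CB m a b g -> CB m a b (fun x => f x - g x).
Proof. intros Hf Hg i Hi x Hx; apply cR_minus; [apply (Hf i)|apply (Hg i)]; auto. Qed.
Lemma CB_opp m a b f : CB m a b f -> CB m a b (fun x => - f x).
Proof. intros Hf i Hi x Hx; apply cR_opp; apply (Hf i); auto. Qed.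
Lemma CB_const m a b c : CB m a b (fun _ => c).
Proof. intros i Hi x Hx; apply cR_const. Qed.

Ltac cb := repeat (first [ apply CB_mult | apply CB_plus | apply CB_minus | apply CB_opp
   | apply CB_const | (apply CE_CB; assumption) | assumption ]).

Lemma loc_open (A th : R) : -A < th < A -> locally th (fun t => -A < t < A).
Proof.
  intros H. apply (locally_interval _ th (Finite (-A)) (Finite A)); simpl; try lra.
  intros; lra.
Qed.

Lemma key m a b A K Rf cK CK CR ths lam eps mu psi xi th :
  intervals_ok m a b -> K_ok m a b K cK CK -> R_ok m a b A Rf CR ->
  -A <= ths <= A -> EIG1 m a b K Rf ths lam psi -> EIG2 m a b A K Rf eps mu xi ->
  -A < th < A ->
  is_derive (fun t => intOmega m a b (fun x => psi x * xi x t)) th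
      (intOmega m a b (fun x => psi x * dth xi x th)) /\
  is_derive (fun t => intOmega m a b (fun x => psi x * dth xi x t)) th
      (intOmega m a b (fun x => psi x * dthth xi x th)) /\
  eps ^ 2 * intOmega m a b (fun x => psi x * dthth xi x th) =
  (lam - mu) * intOmega m a b (fun x => psi x * xi x th)
  + intOmega m a b (fun x => psi x * xi x th * (Rf x ths - Rf x th)).
Proof.
  intros Hint HK HR Hths [P1 [P2 [P3 [P4 [P5 P6]]]]]
    [X1 [X2 [X3 [X4 [X5 [X6 [X7 [X8 X9]]]]]]]] Hth.
  assert (Ho := ord_of _ _ _ Hint).
  destruct HK as [K1 [K2 [K3 _]]].
  destruct HR as [R1 [R2 [R3 R4]]].
  assert (CK' : CE K) by (intros z; apply exd_cont; auto).
  assert (Cpsi : CE psi) by (intros z; apply exd_cont; auto).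
  assert (Cxi : forall t, CE (fun y => xi y t)) by (intros t z; apply exd_cont; auto).
  assert (Hth' : -A <= th <= A) by lra.
  assert (X6a : forall x t, inOmegaBar m a b x -> -A <= t <= A -> cont2 xi x t)
    by (intros x t H1 H2; exact (proj1 (X6 x t H1 H2))).
  assert (X6c : forall x t, inOmegaBar m a b x -> -A <= t <= A -> cont2 (dth xi) x t)
    by (intros x t H1 H2; exact (proj1 (proj2 (proj2 (X6 x t H1 H2))))).
  assert (X6d : forall x t, inOmegaBar m a b x -> -A <= t <= A -> cont2 (dxx xi) x t)
    by (intros x t H1 H2; exact (proj1 (proj2 (proj2 (proj2 (X6 x t H1 H2)))))).
  assert (X6e : forall x t, inOmegaBar m a b x -> -A <= t <= A -> cont2 (dthth xi) x t)
    by (intros x t H1 H2; exact (proj2 (proj2 (proj2 (proj2 (X6 x t H1 H2)))))).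
  assert (R3a : forall x t, inOmegaBar m a b x -> -A <= t <= A -> cont2 Rf x t)
    by (intros x t H1 H2; exact (proj1 (R3 x t H1 H2))).
  assert (P4c : forall x, inOmegaBar m a b x -> continuous (Derive_n psi 2) x)
    by (intros x H1; exact (proj2 (proj2 (P4 x H1)))).
  clear X6 R3 P4.
  assert (Cx : forall F t, -A <= t <= A ->
            (forall x, inOmegaBar m a b x -> -A <= t <= A -> cont2 F x t) ->
            CB m a b (fun x => F x t)).
  { intros F t Ht HF i Hi x Hx. apply (c2_x F x t). apply cont2_c2. apply HF; [|exact Ht].
    exact (inBar m a b i x Hi Hx). }
  assert (Cdxx : CB m a b (fun x => dxx xi x th)).
  { apply (Cx (dxx xi) th Hth'). intros x Hx _; apply X6d; auto. }
  assert (Cdthth : CB m a b (fun x => dthth xi x th)).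
  { apply (Cx (dthth xi) th Hth'). intros x Hx _; apply X6e; auto. }
  assert (CRf : forall t, -A <= t <= A -> CB m a b (fun x => Rf x t)).
  { intros t Ht. apply (Cx Rf t Ht). intros x Hx _; apply R3a; auto. }
  assert (CD2 : CB m a b (Derive_n psi 2)).
  { intros i Hi x Hx. apply P4c. exact (inBar m a b i x Hi Hx). }
  assert (CLp : CE (Lop m a b K psi)) by (apply CE_Lop; auto).
  assert (CLx : CE (Lop m a b K (fun y => xi y th))) by (apply CE_Lop; auto).
  assert (Cxith : CE (fun y => xi y th)) by auto.
  split; [|split].
  -
    assert (E : intOmega m a b (fun x => psi x * dth xi x th) =
                intOmega m a b (fun x => Derive (fun u => psi x * xi x u) th)).
    { apply intO_ext; auto. intros i Hi x _. rewrite Derive_scal. reflexivity. }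
    rewrite E. apply (intO_derive m a b (fun t x => psi x * xi x t)); auto.
    + intros t x. apply ex_derive_scal; auto.
    + intros i Hi x Hx.
      apply (continuity_2d_pt_ext (fun u v => psi v * dth xi v u)).
      * intros u v. rewrite Derive_scal. reflexivity.
      * apply c2_mult. apply c2_snd; auto.
        apply (c2_swap (dth xi)). apply cont2_c2. apply X6c; auto. exact (inBar m a b i x Hi Hx).
    + apply filter_forall. intros t. apply CE_IE; auto. apply CE_mult; auto.
  -
    assert (E : intOmega m a b (fun x => psi x * dthth xi x th) =
                intOmega m a b (fun x => Derive (fun u => psi x * dth xi x u) th)).
    { apply intO_ext; auto. intros i Hi x _. rewrite Derive_scal. reflexivity. }
    rewrite E. apply (intO_derive m a b (fun t x => psi x * dth xi x t)); auto.
    + intros t x. apply ex_derive_scal; auto.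
    + intros i Hi x Hx.
      apply (continuity_2d_pt_ext (fun u v => psi v * dthth xi v u)).
      * intros u v. rewrite Derive_scal. reflexivity.
      * apply c2_mult. apply c2_snd; auto.
        apply (c2_swap (dthth xi)). apply cont2_c2. apply X6e; auto. exact (inBar m a b i x Hi Hx).
    + eapply filter_imp; [|apply (loc_open A th Hth)]. intros t Ht.
      apply CB_IE; auto. apply CB_mult. apply CE_CB; auto.
      apply (Cx (dth xi) t); [lra|]. intros x Hx _; apply X6c; auto; lra.
  -
    assert (CBp : CB m a b psi) by (apply CE_CB; exact Cpsi).
    assert (CBx : CB m a b (fun y => xi y th)) by (apply CE_CB; exact Cxith).
    assert (I1 : IE m a b (fun x => psi x * - Derive (Derive (fun y => xi y th)) x))
      by (apply CB_IE; [exact Ho|]; apply CB_mult; [exact CBp|apply CB_opp; exact Cdxx]).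
    assert (I2 : IE m a b (fun x => psi x * Lop m a b K (fun y => xi y th) x))
      by (apply CB_IE; [exact Ho|]; apply CB_mult; [exact CBp|apply CE_CB; exact CLx]).
    assert (CB4 : CB m a b (fun x => psi x * xi x th)) by (apply CB_mult; [exact CBp|exact CBx]).
    assert (I3 : IE m a b (fun x => psi x * xi x th * Rf x th))
      by (apply CB_IE; [exact Ho|]; apply CB_mult; [exact CB4|exact (CRf th Hth')]).
    assert (I7 : IE m a b (fun x => psi x * xi x th * Rf x ths))
      by (apply CB_IE; [exact Ho|]; apply CB_mult; [exact CB4|exact (CRf ths Hths)]).
    assert (I4 : IE m a b (fun x => psi x * xi x th)) by (apply CB_IE; [exact Ho|exact CB4]).
    assert (I5 : IE m a b (fun x => mu * (psi x * xi x th)))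
      by (apply CB_IE; [exact Ho|]; apply CB_mult; [apply CB_const|exact CB4]).
    assert (I6 : IE m a b (fun x => psi x * dthth xi x th))
      by (apply CB_IE; [exact Ho|]; apply CB_mult; [exact CBp|exact Cdthth]).
    assert (I8 : IE m a b (fun x => (- Derive (Derive psi) x) * xi x th))
      by (apply CB_IE; [exact Ho|]; apply CB_mult; [apply CB_opp; exact CD2|exact CBx]).
    assert (I9 : IE m a b (fun x => xi x th * Lop m a b K psi x))
      by (apply CB_IE; [exact Ho|]; apply CB_mult; [exact CBx|apply CE_CB; exact CLp]).
    assert (I10 : IE m a b (fun x => lam * (psi x * xi x th)))
      by (apply CB_IE; [exact Ho|]; apply CB_mult; [apply CB_const|exact CB4]).
    assert (I12 : IE m a b (fun x => psi x * - Derive (Derive (fun y => xi y th)) x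
                 + psi x * Lop m a b K (fun y => xi y th) x)) by (intros i Hi; apply ex_RInt_plusR; [apply I1|apply I2]; exact Hi).
    assert (I35 : IE m a b (fun x => psi x * xi x th * Rf x th + mu * (psi x * xi x th)))
      by (intros i Hi; apply ex_RInt_plusR; [apply I3|apply I5]; exact Hi).
    set (T1 := intOmega m a b (fun x => psi x * - Derive (Derive (fun y => xi y th)) x)).
    set (T2 := intOmega m a b (fun x => psi x * Lop m a b K (fun y => xi y th) x)).
    set (T3 := intOmega m a b (fun x => psi x * xi x th * Rf x th)).
    set (T4 := intOmega m a b (fun x => psi x * xi x th * Rf x ths)).
    set (h := intOmega m a b (fun x => psi x * xi x th)).
    assert (Ea : eps ^ 2 * intOmega m a b (fun x => psi x * dthth xi x th) = T1 + T2 - T3 - mu * h).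
    { rewrite <- (intO_scal m a b _ (eps ^ 2) I6).
      rewrite (intO_ext m a b _ (fun x => (psi x * - Derive (Derive (fun y => xi y th)) x
          + psi x * Lop m a b K (fun y => xi y th) x) - (psi x * xi x th * Rf x th + mu * (psi x * xi x th))) Ho).
      - rewrite (intO_minus m a b _ _ I12 I35).
        rewrite (intO_plus m a b _ _ I1 I2).
        rewrite (intO_plus m a b _ _ I3 I5).
        rewrite (intO_scal m a b _ mu I4).
        unfold T1, T2, T3, h. ring.
      - intros i Hi x Hx. assert (Hx' : inOmega m a b x) by (exact (inOp m a b i x Hi Hx)).
        specialize (X7 x th Hx' Hth).
        change (Derive (Derive (fun y => xi y th)) x) with (dxx xi x th).
        replace (eps ^ 2 * (psi x * dthth xi x th)) with (psi x * (eps ^ 2 * dthth xi x th)) by ring.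
        replace (eps ^ 2 * dthth xi x th) with
          (- dxx xi x th + Lop m a b K (fun y => xi y th) x - Rf x th * xi x th - mu * xi x th) by lra.
        ring. }
    assert (Eb : T1 = intOmega m a b (fun x => (- Derive (Derive psi) x) * xi x th)).
    { unfold T1. apply intO_ibp; [exact Ho|exact P2|exact P3|intros x; apply X2|intros x; apply X3| |].
      - intros i Hi x Hx. split. apply (CD2 i Hi x Hx). apply (Cdxx i Hi x Hx).
      - intros i Hi. destruct (P6 i Hi) as [Q1 Q2]. destruct (X8 i th Hi Hth') as [Q3 Q4].
        split; [exact Q1|split; [exact Q2|split; [exact Q3|exact Q4]]]. }
    assert (Ec : T2 = intOmega m a b (fun x => xi x th * Lop m a b K psi x)).
    { unfold T2. apply Lsym; [exact Ho|exact Cpsi|exact Cxith|exact CK'|exact K3]. }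
    assert (Ed : intOmega m a b (fun x => (- Derive (Derive psi) x) * xi x th)
                 + intOmega m a b (fun x => xi x th * Lop m a b K psi x)
                 = T4 + lam * h).
    { rewrite <- (intO_plus m a b _ _ I8 I9).
      unfold T4, h. rewrite <- (intO_scal m a b _ lam I4).
      rewrite <- (intO_plus m a b _ _ I7 I10).
      apply intO_ext; [exact Ho|]. intros i Hi x Hx. assert (Hx' : inOmega m a b x) by (exact (inOp m a b i x Hi Hx)).
      specialize (P5 x Hx'). change (Derive (Derive psi) x) with (Derive_n psi 2 x).
      cbv beta in P5.
      replace (- Derive_n psi 2 x * xi x th + xi x th * Lop m a b K psi x) with
        (xi x th * (- Derive_n psi 2 x + Lop m a b K psi x)) by ring.
      replace (- Derive_n psi 2 x + Lop m a b K psi x) with ((Rf x ths - 0) * psi x + lam * psi x) by lra.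
      ring. }
    assert (Ee : intOmega m a b (fun x => psi x * xi x th * (Rf x ths - Rf x th)) = T4 - T3).
    { unfold T4, T3. rewrite <- (intO_minus m a b _ _ I7 I3).
      apply intO_ext; [exact Ho|]. intros; ring. }
    rewrite Ea, Eb, Ec, Ee. fold h. lra.
Qed.

Ltac rring := match goal with |- ?a = ?b => change (@eq R a b); unfold Rminus; ring end.
Ltac rfield := match goal with |- ?a = ?b => change (@eq R a b); unfold Rminus; field end.

Lemma is_derive_eq (f : R -> R) x l l' : is_derive f x l -> l = l' -> is_derive f x l'.
Proof. intros H ->; exact H. Qed.

Lemma mono_neg (f df : R -> R) a b : a <= b ->
  (forall x, a < x < b -> is_derive f x (df x)) ->
  (forall x, a <= x <= b -> continuous f x) ->
  (forall x, a < x < b -> df x <= 0) -> f b <= f a.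
Proof.
  intros Hab Hd Hc Hn.
  assert (H := mono (fun x => - f x) (fun x => - df x) a b Hab).
  cut (- f a <= - f b); [lra|]. apply H.
  - intros x Hx. apply (is_derive_opp f); auto.
  - intros x Hx. apply cR_opp; auto.
  - intros x Hx. specialize (Hn x Hx); lra.
Qed.

Lemma exd_cont' (f : R -> R) x l : is_derive f x l -> continuous f x.
Proof. intros H; apply exd_cont; exists l; exact H. Qed.

Lemma cR_id x : continuous (fun y : R => y) x.
Proof. apply continuous_id. Qed.

Lemma sturm (f f1 f2 : R -> R) c k : 0 < k ->
  (forall x, c - PI / (2 * k) <= x <= c + PI / (2 * k) ->
     is_derive f x (f1 x) /\ is_derive f1 x (f2 x) /\ 0 < f x /\ f2 x <= - (k ^ 2) * f x) ->
  False.
Proof.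
  intros Hk H.
  set (l := c - PI / (2 * k)). set (r := c + PI / (2 * k)).
  assert (HPI := PI_RGT_0).
  assert (Hlr : l <= r) by (unfold l, r; assert (0 < PI / (2*k)) by (apply Rdiv_lt_0_compat; lra); lra).
  set (W := fun x => f1 x * cos (k * (x - c)) + f x * (k * sin (k * (x - c)))).
  set (dW := fun x => (f2 x + k ^ 2 * f x) * cos (k * (x - c))).
  assert (HW : forall x, l <= x <= r -> is_derive W x (dW x)).
  { intros x Hx. destruct (H x Hx) as [D1 [D2 _]].
    assert (Dc : is_derive (fun x => cos (k * (x - c))) x (- k * sin (k * (x - c)))).
    { auto_derive; auto. rring. }
    assert (Ds : is_derive (fun x => k * sin (k * (x - c))) x (k * k * cos (k * (x - c)))).
    { auto_derive; auto. rring. }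
    apply is_derive_eq with (plus (plus (mult (f2 x) (cos (k * (x - c)))) (mult (f1 x) (- k * sin (k * (x - c)))))
                                  (plus (mult (f1 x) (k * sin (k * (x - c)))) (mult (f x) (k * k * cos (k * (x - c)))))).
    - apply (is_derive_plus (fun x => f1 x * cos (k * (x - c))) (fun x => f x * (k * sin (k * (x - c))))).
      + apply (is_derive_mult f1 (fun x => cos (k * (x - c)))); auto. intros; apply Rmult_comm.
      + apply (is_derive_mult f (fun x => k * sin (k * (x - c)))); auto. intros; apply Rmult_comm.
    - unfold dW, plus, mult; simpl. ring. }
  assert (Hmono : W r <= W l).
  { apply (mono_neg W dW l r Hlr).
    - intros x Hx; apply HW; lra.
    - intros x Hx; apply (exd_cont' W x (dW x)); apply HW; auto.
    - intros x Hx. unfold dW. destruct (H x ltac:(unfold l, r in *; lra)) as [_ [_ [Hp Hf2]]].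
      apply Rmult_le_0_r; [nra|]. apply cos_ge_0.
      + assert (k * (x - c) >= k * (l - c)) by (apply Rmult_ge_compat_l; lra).
        unfold l in H0. replace (k * (c - PI / (2 * k) - c)) with (- (PI / 2)) in H0 by (field; lra). lra.
      + assert (k * (x - c) <= k * (r - c)) by (apply Rmult_le_compat_l; lra).
        unfold r in H0. replace (k * (c + PI / (2 * k) - c)) with (PI / 2) in H0 by (field; lra). lra. }
  unfold W in Hmono.
  replace (k * (r - c)) with (PI / 2) in Hmono by (unfold r; field; lra).
  replace (k * (l - c)) with (- (PI / 2)) in Hmono by (unfold l; field; lra).
  rewrite cos_neg, sin_neg, cos_PI2, sin_PI2 in Hmono.
  assert (Hq : 0 < PI / (2 * k)) by (apply Rdiv_lt_0_compat; lra).
  destruct (H l ltac:(unfold l; lra)) as [_ [_ [Hl _]]]. destruct (H r ltac:(unfold r; lra)) as [_ [_ [Hr _]]].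
  nra.
Qed.

Lemma grow_r (f F1 f2 : R -> R) t d k2 : 0 < d -> 0 <= k2 ->
  (forall x, t < x < t + d -> is_derive f x (F1 x) /\ is_derive F1 x (f2 x) /\ k2 * f x <= f2 x) ->
  (forall x, t <= x <= t + d -> continuous f x /\ continuous F1 x /\ 0 <= f x) ->
  0 <= F1 t -> f t * (1 + k2 * d ^ 2 / 2) <= f (t + d).
Proof.
  intros Hd Hk HD HC HF.
  assert (S1 : forall x, t <= x <= t + d -> F1 t <= F1 x).
  { intros x Hx. apply (mono F1 f2); try lra.
    - intros y Hy; apply HD; lra.
    - intros y Hy; apply HC; lra.
    - intros y Hy. destruct (HD y ltac:(lra)) as [_ [_ H]]. destruct (HC y ltac:(lra)) as [_ [_ H']]. nra. }
  assert (S2 : forall x, t <= x <= t + d -> f t <= f x).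
  { intros x Hx. apply (mono f F1); try lra.
    - intros y Hy; apply HD; lra.
    - intros y Hy; apply HC; lra.
    - intros y Hy. specialize (S1 y ltac:(lra)). lra. }
  assert (S3 : forall x, t <= x <= t + d -> F1 t + k2 * f t * (x - t) <= F1 x).
  { intros x Hx.
    assert (M := mono (fun y => F1 y - k2 * f t * (y - t)) (fun y => f2 y - k2 * f t) t x).
    simpl in M. replace (F1 t - k2 * f t * (t - t)) with (F1 t) in M by ring.
    cut (F1 t <= F1 x - k2 * f t * (x - t)); [lra|]. apply M; [lra| | |].
    - intros y Hy. destruct (HD y ltac:(lra)) as [_ [D2 _]].
      apply (is_derive_minus F1 (fun y => k2 * f t * (y - t))); auto.
      apply is_derive_eq with (k2 * f t * 1); [auto_derive; auto; try rring | rring].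
    - intros y Hy. apply cR_minus. apply HC; lra. apply cR_scal. apply cR_minus. apply cR_id. apply cR_const.
    - intros y Hy. destruct (HD y ltac:(lra)) as [_ [_ H]]. specialize (S2 y ltac:(lra)).
      apply Rle_trans with (k2 * f y - k2 * f t); [|lra]. nra. }
  assert (Hm : f t - k2 * f t * (t - t) ^ 2 / 2 <= f (t + d) - k2 * f t * (t + d - t) ^ 2 / 2).
  2: { replace ((t - t) ^ 2) with 0 in Hm by ring. replace (t + d - t) with d in Hm by ring. nra. }
  apply (mono (fun y => f y - k2 * f t * (y - t) ^ 2 / 2) (fun y => F1 y - k2 * f t * (y - t)) t (t + d)); [lra| | |].
  - intros y Hy. destruct (HD y ltac:(lra)) as [D1 _].
    apply (is_derive_minus f (fun y => k2 * f t * (y - t) ^ 2 / 2)); auto.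
    apply is_derive_eq with (k2 * f t * (y - t)); [auto_derive; auto; try rfield | rring].
  - intros y Hy. apply cR_minus. apply HC; lra.
    apply (continuous_ext (fun y => k2 * f t / 2 * ((y - t) * (y - t)))); [intros; simpl; field|].
    apply cR_scal. apply cR_mult; apply cR_minus; try apply cR_id; apply cR_const.
  - intros y Hy. specialize (S3 y ltac:(lra)). specialize (S1 t ltac:(lra)). lra.
Qed.

Lemma grow_l (f F1 f2 : R -> R) t d k2 : 0 < d -> 0 <= k2 ->
  (forall x, t - d < x < t -> is_derive f x (F1 x) /\ is_derive F1 x (f2 x) /\ k2 * f x <= f2 x) ->
  (forall x, t - d <= x <= t -> continuous f x /\ continuous F1 x /\ 0 <= f x) ->
  F1 t <= 0 -> f t * (1 + k2 * d ^ 2 / 2) <= f (t - d).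
Proof.
  intros Hd Hk HD HC HF.
  assert (S1 : forall x, t - d <= x <= t -> F1 x <= F1 t).
  { intros x Hx. apply (mono F1 f2); try lra.
    - intros y Hy; apply HD; lra.
    - intros y Hy; apply HC; lra.
    - intros y Hy. destruct (HD y ltac:(lra)) as [_ [_ H]]. destruct (HC y ltac:(lra)) as [_ [_ H']]. nra. }
  assert (S2 : forall x, t - d <= x <= t -> f t <= f x).
  { intros x Hx. apply (mono_neg f F1); try lra.
    - intros y Hy; apply HD; lra.
    - intros y Hy; apply HC; lra.
    - intros y Hy. specialize (S1 y ltac:(lra)). lra. }
  assert (S3 : forall x, t - d <= x <= t -> F1 x <= F1 t + k2 * f t * (x - t)).
  { intros x Hx.
    assert (M := mono (fun y => F1 y - k2 * f t * (y - t)) (fun y => f2 y - k2 * f t) x t).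
    simpl in M. replace (F1 t - k2 * f t * (t - t)) with (F1 t) in M by ring.
    cut (F1 x - k2 * f t * (x - t) <= F1 t); [lra|]. apply M; [lra| | |].
    - intros y Hy. destruct (HD y ltac:(lra)) as [_ [D2 _]].
      apply (is_derive_minus F1 (fun y => k2 * f t * (y - t))); auto.
      apply is_derive_eq with (k2 * f t * 1); [auto_derive; auto; try rring | rring].
    - intros y Hy. apply cR_minus. apply HC; lra. apply cR_scal. apply cR_minus. apply cR_id. apply cR_const.
    - intros y Hy. destruct (HD y ltac:(lra)) as [_ [_ H]]. specialize (S2 y ltac:(lra)).
      apply Rle_trans with (k2 * f y - k2 * f t); [|lra]. nra. }
  assert (Hm : f t - k2 * f t * (t - t) ^ 2 / 2 <= f (t - d) - k2 * f t * (t - d - t) ^ 2 / 2).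
  2: { replace ((t - t) ^ 2) with 0 in Hm by ring. replace ((t - d - t) ^ 2) with (d ^ 2) in Hm by ring. nra. }
  apply (mono_neg (fun y => f y - k2 * f t * (y - t) ^ 2 / 2) (fun y => F1 y - k2 * f t * (y - t)) (t - d) t); [lra| | |].
  - intros y Hy. destruct (HD y ltac:(lra)) as [D1 _].
    apply (is_derive_minus f (fun y => k2 * f t * (y - t) ^ 2 / 2)); auto.
    apply is_derive_eq with (k2 * f t * (y - t)); [auto_derive; auto; try rfield | rring].
  - intros y Hy. apply cR_minus. apply HC; lra.
    apply (continuous_ext (fun y => k2 * f t / 2 * ((y - t) * (y - t)))); [intros; simpl; field|].
    apply cR_scal. apply cR_mult; apply cR_minus; try apply cR_id; apply cR_const.
  - intros y Hy. specialize (S3 y ltac:(lra)). specialize (S1 t ltac:(lra)). lra.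
Qed.

Lemma lim_ge (g : R -> R) p : continuous g p ->
  (forall eta, 0 < eta -> exists x, Rabs (x - p) < eta /\ 0 < g x) -> 0 <= g p.
Proof.
  intros Hc H. apply Rnot_lt_le; intros Hlt.
  destruct (proj1 (cont_ed g p) Hc (- g p) ltac:(lra)) as [d [Hd Hd']].
  destruct (H d Hd) as [x [Hx Hgx]]. specialize (Hd' x Hx).
  apply Rabs_def2 in Hd'. lra.
Qed.

Lemma lim_eq (g1 g2 : R -> R) p : continuous g1 p -> continuous g2 p ->
  (forall eta, 0 < eta -> exists x, Rabs (x - p) < eta /\ g1 x = g2 x) -> g1 p = g2 p.
Proof.
  intros H1 H2 H. destruct (Req_dec (g1 p) (g2 p)) as [E|E]; auto. exfalso.
  set (e := Rabs (g1 p - g2 p) / 2).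
  assert (He : 0 < e) by (unfold e; apply Rdiv_lt_0_compat; [apply Rabs_pos_lt; lra|lra]).
  destruct (proj1 (cont_ed g1 p) H1 e He) as [d1 [Hd1 Hd1']].
  destruct (proj1 (cont_ed g2 p) H2 e He) as [d2 [Hd2 Hd2']].
  destruct (H (Rmin d1 d2) (Rmin_pos _ _ Hd1 Hd2)) as [x [Hx Hg]].
  assert (A1 := Hd1' x (Rlt_le_trans _ _ _ Hx (Rmin_l _ _))).
  assert (A2 := Hd2' x (Rlt_le_trans _ _ _ Hx (Rmin_r _ _))).
  rewrite Hg in A1.
  assert (Rabs (g1 p - g2 p) <= Rabs (g2 x - g1 p) + Rabs (g2 x - g2 p)).
  { replace (g1 p - g2 p) with (- (g2 x - g1 p) + (g2 x - g2 p)) by ring.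
    eapply Rle_trans; [apply Rabs_triang|]. rewrite Rabs_Ropp; lra. }
  unfold e in *. lra.
Qed.

Lemma approach_l p q : p < q -> forall eta, 0 < eta -> exists x, Rabs (x - p) < eta /\ p < x < q.
Proof.
  intros Hpq eta He. exists (p + Rmin eta (q - p) / 2).
  assert (0 < Rmin eta (q - p)) by (apply Rmin_pos; lra).
  assert (Rmin eta (q - p) <= eta) by apply Rmin_l.
  assert (Rmin eta (q - p) <= q - p) by apply Rmin_r.
  split; [|lra]. rewrite Rabs_right; lra.
Qed.
Lemma approach_r p q : p < q -> forall eta, 0 < eta -> exists x, Rabs (x - q) < eta /\ p < x < q.
Proof.
  intros Hpq eta He. exists (q - Rmin eta (q - p) / 2).
  assert (0 < Rmin eta (q - p)) by (apply Rmin_pos; lra).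
  assert (Rmin eta (q - p) <= eta) by apply Rmin_l.
  assert (Rmin eta (q - p) <= q - p) by apply Rmin_r.
  split; [|lra]. rewrite Rabs_left; lra.
Qed.

Lemma psi2_neg m a b K cK CK Rf A CR ths lam psi p :
  intervals_ok m a b -> K_ok m a b K cK CK -> R_ok m a b A Rf CR -> -A <= ths <= A ->
  EIG1 m a b K Rf ths lam psi -> inOmegaBar m a b p ->
  (forall eta, 0 < eta -> exists x, Rabs (x - p) < eta /\ inOmega m a b x) ->
  psi p = 0 -> Derive_n psi 2 p < 0.
Proof.
  intros Hint HK HR Hths [P1 [P2 [P3 [P4 [P5 P6]]]]] Hp Happ H0.
  assert (Ho := ord_of _ _ _ Hint).
  destruct HK as [K1 [K2 [K3 [K4 K5]]]].
  destruct HR as [R1 [R2 [R3 R4]]].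
  assert (CK' : CE K) by (intros z; apply exd_cont; auto).
  assert (Cpsi : CE psi) by (intros z; apply exd_cont; auto).
  assert (CLp : CE (Lop m a b K psi)) by (apply CE_Lop; auto).
  assert (E : Derive_n psi 2 p = Lop m a b K psi p - (Rf p ths - 0) * psi p - lam * psi p).
  { apply (lim_eq (Derive_n psi 2) (fun x => Lop m a b K psi x - (Rf x ths - 0) * psi x - lam * psi x)).
    - exact (proj2 (proj2 (P4 p Hp))).
    - apply cR_minus; [apply cR_minus|].
      + apply CLp.
      + apply cR_mult; [|apply Cpsi]. apply cR_minus; [|apply cR_const].
        apply (c2_x Rf p ths). apply cont2_c2. exact (proj1 (R3 p ths Hp Hths)).
      + apply cR_scal; apply Cpsi.
    - intros eta He. destruct (Happ eta He) as [x [Hx Hin]]. exists x; split; auto.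
      specialize (P5 x Hin). cbv beta in P5. lra. }
  rewrite E, H0.
  assert (HL : Lop m a b K psi p = -1 * intOmega m a b (fun y => psi y * K (p - y))).
  { unfold Lop. rewrite <- intO_scal.
    - apply intO_ext; auto. intros; rewrite H0; ring.
    - apply CE_IE; auto. apply CE_mult; auto. apply CE_Kd1; auto. }
  assert (Hpos : 0 < intOmega m a b (fun y => psi y * K (p - y))).
  { apply intO_pos; auto. destruct Hint; auto.
    - apply CE_CB. apply CE_mult; auto. apply CE_Kd1; auto.
    - intros i Hi y Hy. assert (Hy' : inOmega m a b y) by (exact (inOp m a b i y Hi Hy)).
      apply Rmult_lt_0_compat; [apply P1; auto|].
      assert (0 <= K (p - y) - cK); [|lra].
      apply (lim_ge (fun x => K (x - y) - cK)).
      + apply cR_minus; [|apply cR_const]. apply (c2_x (fun x y => K (x - y)) p y). apply c2_diff; auto.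
      + intros eta He. destruct (Happ eta He) as [x [Hx Hin]]. exists x; split; auto.
        destruct (K5 x y Hin Hy') as [[Hk _] _]. lra. }
  rewrite HL. lra.
Qed.

Lemma psi_end_pos m a b K cK CK Rf A CR ths lam psi i :
  intervals_ok m a b -> K_ok m a b K cK CK -> R_ok m a b A Rf CR -> -A <= ths <= A ->
  EIG1 m a b K Rf ths lam psi -> (i < m)%nat -> 0 < psi (a i) /\ 0 < psi (b i).
Proof.
  intros Hint HK HR Hths He Hi.
  assert (Ho := ord_of _ _ _ Hint). assert (Hpq := Ho i Hi).
  assert (He' := He). destruct He' as [P1 [P2 [P3 [P4 [P5 P6]]]]].
  assert (Cpsi : CE psi) by (intros z; apply exd_cont; auto).
  assert (Cd : CE (Derive psi)) by (intros z; apply exd_cont; auto).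
  destruct (P6 i Hi) as [N1 N2].
  split.
  -
    set (p := a i). set (q := b i).
    assert (Hge : 0 <= psi p).
    { apply lim_ge; auto. intros eta Heta. destruct (approach_l p q Hpq eta Heta) as [x [Hx Hx']].
      exists x; split; auto. apply P1. exact (inOp m a b i x Hi Hx'). }
    destruct Hge as [Hgt|Heq]; auto. exfalso. symmetry in Heq.
    assert (Hn := psi2_neg m a b K cK CK Rf A CR ths lam psi p Hint HK HR Hths He
                    (inBar m a b i p Hi ltac:(unfold p, q in *; lra))).
    assert (Hn' : Derive_n psi 2 p < 0).
    { apply Hn; auto. intros eta Heta. destruct (approach_l p q Hpq eta Heta) as [x [Hx Hx']].
      exists x; split; auto. exact (inOp m a b i x Hi Hx'). }
    destruct (proj1 (cont_ed _ p) (proj2 (proj2 (P4 p (inBar m a b i p Hi ltac:(unfold p, q in *; lra)))))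
                (- Derive_n psi 2 p) ltac:(lra)) as [d [Hd Hd']].
    destruct (approach_l p q Hpq d Hd) as [x1 [Hx1 Hx1']].
    assert (Hneg2 : forall y, p <= y <= x1 -> Derive_n psi 2 y < 0).
    { intros y Hy. assert (Rabs (y - p) < d).
      { rewrite Rabs_right in Hx1 by lra. rewrite Rabs_right by lra. lra. }
      specialize (Hd' y H). apply Rabs_def2 in Hd'. lra. }
    assert (Hd1 : forall y, p <= y <= x1 -> Derive psi y <= 0).
    { intros y Hy. rewrite <- N1. fold p.
      apply (mono_neg (Derive psi) (Derive_n psi 2) p y); try lra.
      - intros z Hz. apply (Derive_correct (Derive psi)). apply P3.
      - intros z _; apply Cd.
      - intros z Hz. apply Rlt_le, Hneg2; lra. }
    assert (psi x1 <= psi p).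
    { apply (mono_neg psi (Derive psi) p x1); try lra.
      - intros z Hz. apply Derive_correct. apply P2.
      - intros z _; apply Cpsi.
      - intros z Hz. apply Hd1; lra. }
    assert (0 < psi x1) by (apply P1; exact (inOp m a b i x1 Hi Hx1')).
    lra.
  -
    set (p := a i). set (q := b i).
    assert (Hge : 0 <= psi q).
    { apply lim_ge; auto. intros eta Heta. destruct (approach_r p q Hpq eta Heta) as [x [Hx Hx']].
      exists x; split; auto. apply P1. exact (inOp m a b i x Hi Hx'). }
    destruct Hge as [Hgt|Heq]; auto. exfalso. symmetry in Heq.
    assert (Hn := psi2_neg m a b K cK CK Rf A CR ths lam psi q Hint HK HR Hths He
                    (inBar m a b i q Hi ltac:(unfold p, q in *; lra))).
    assert (Hn' : Derive_n psi 2 q < 0).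
    { apply Hn; auto. intros eta Heta. destruct (approach_r p q Hpq eta Heta) as [x [Hx Hx']].
      exists x; split; auto. exact (inOp m a b i x Hi Hx'). }
    destruct (proj1 (cont_ed _ q) (proj2 (proj2 (P4 q (inBar m a b i q Hi ltac:(unfold p, q in *; lra)))))
                (- Derive_n psi 2 q) ltac:(lra)) as [d [Hd Hd']].
    destruct (approach_r p q Hpq d Hd) as [x1 [Hx1 Hx1']].
    assert (Hneg2 : forall y, x1 <= y <= q -> Derive_n psi 2 y < 0).
    { intros y Hy. assert (Rabs (y - q) < d).
      { rewrite Rabs_left in Hx1 by lra. destruct (Req_dec y q) as [->|Hyq].
        - rewrite Rminus_diag, Rabs_R0; auto.
        - rewrite Rabs_left by lra. lra. }
      specialize (Hd' y H). apply Rabs_def2 in Hd'. lra. }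
    assert (Hd1 : forall y, x1 <= y <= q -> 0 <= Derive psi y).
    { intros y Hy. rewrite <- N2. fold q.
      apply (mono_neg (Derive psi) (Derive_n psi 2) y q); try lra.
      - intros z Hz. apply (Derive_correct (Derive psi)). apply P3.
      - intros z _; apply Cd.
      - intros z Hz. apply Rlt_le, Hneg2; lra. }
    assert (psi x1 <= psi q).
    { apply (mono psi (Derive psi) x1 q); try lra.
      - intros z Hz. apply Derive_correct. apply P2.
      - intros z _; apply Cpsi.
      - intros z Hz. apply Hd1; lra. }
    assert (0 < psi x1) by (apply P1; exact (inOp m a b i x1 Hi Hx1')).
    lra.
Qed.

Definition clamp (A x : R) := Rmax (- A) (Rmin A x).

Lemma clamp_in A x : 0 <= A -> - A <= clamp A x <= A.
Proof. intros H; unfold clamp, Rmax, Rmin; repeat destruct Rle_dec; lra. Qed.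
Lemma clamp_id A x : - A <= x <= A -> clamp A x = x.
Proof. intros H; unfold clamp, Rmax, Rmin; repeat destruct Rle_dec; lra. Qed.
Lemma clamp_lip A x y : 0 <= A -> Rabs (clamp A y - clamp A x) <= Rabs (y - x).
Proof.
  intros H. unfold clamp, Rmax, Rmin; repeat destruct Rle_dec;
  repeat match goal with |- context [Rabs ?z] => destruct (Rcase_abs z) as [?|?];
     [rewrite (Rabs_left z) by lra|rewrite (Rabs_right z) by lra] end; lra.
Qed.

Lemma WC_clamp A F : 0 < A -> (forall s0, - A <= s0 <= A -> WC (fun s => - A <= s <= A) F s0) ->
  CE (fun s => F (clamp A s)).
Proof.
  intros HA H x. apply cont_ed. intros eps Heps.
  assert (Hc := clamp_in A x ltac:(lra)).
  destruct (H (clamp A x) Hc eps Heps) as [d [Hd Hd']].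
  exists d; split; auto. intros y Hy. apply Hd'.
  - apply clamp_in; lra.
  - eapply Rle_lt_trans; [apply clamp_lip; lra|auto].
Qed.

Lemma psi_bounds m a b K cK CK Rf A CR ths lam psi :
  intervals_ok m a b -> K_ok m a b K cK CK -> R_ok m a b A Rf CR -> -A <= ths <= A ->
  EIG1 m a b K Rf ths lam psi ->
  exists c C, 0 < c /\ forall x, inOmega m a b x -> c <= psi x <= C.
Proof.
  intros Hint HK HR Hths He.
  assert (Ho := ord_of _ _ _ Hint).
  assert (He' := He). destruct He' as [P1 [P2 _]].
  assert (Cpsi : CE psi) by (intros z; apply exd_cont; auto).
  assert (Hn : forall n, (n <= m)%nat -> exists c C, 0 < c /\
      forall i, (i < n)%nat -> forall x, a i <= x <= b i -> c <= psi x <= C).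
  { induction n as [|n IH]; intros Hn.
    - exists 1, 1; split; [lra|]. intros; lia.
    - destruct (IH ltac:(lia)) as [c [C [Hc HcC]]].
      assert (Hi : (n < m)%nat) by lia.
      assert (Hab := Ho n Hi).
      destruct (continuity_ab_min psi (a n) (b n)) as [mn [Hmn1 Hmn2]]; [lra| |].
      { intros; apply continuity_pt_filterlim; apply Cpsi. }
      destruct (continuity_ab_maj psi (a n) (b n)) as [mx [Hmx1 Hmx2]]; [lra| |].
      { intros; apply continuity_pt_filterlim; apply Cpsi. }
      assert (Hpmn : 0 < psi mn).
      { destruct (psi_end_pos m a b K cK CK Rf A CR ths lam psi n Hint HK HR Hths He Hi) as [E1 E2].
        destruct (Req_dec mn (a n)) as [->|N1]; auto.
        destruct (Req_dec mn (b n)) as [->|N2]; auto.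
        apply P1. apply (inOp m a b n mn Hi). lra. }
      exists (Rmin c (psi mn)), (Rmax C (psi mx)). split; [apply Rmin_pos; auto|].
      intros i Hi' x Hx. destruct (Nat.eq_dec i n) as [->|Hne].
      + split.
        * eapply Rle_trans; [apply Rmin_r|]. apply Hmn1; auto.
        * eapply Rle_trans; [apply Hmx1; auto|apply Rmax_r].
      + destruct (HcC i ltac:(lia) x Hx). split.
        * eapply Rle_trans; [apply Rmin_l|]. auto.
        * eapply Rle_trans; [|apply Rmax_l]. auto. }
  destruct (Hn m (Nat.le_refl m)) as [c [C [Hc HcC]]].
  exists c, C; split; auto. intros x [i [Hi Hx]]. exact (HcC i Hi x ltac:(lra)).
Qed.

Lemma uniform_bounds (N : nat) (Q : nat -> (R -> R) -> Prop) (m : nat) (a b : nat -> R) :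
  (forall j, (j < N)%nat -> exists psi, Q j psi /\
     exists c C, 0 < c /\ forall x, inOmega m a b x -> c <= psi x <= C) ->
  exists c C, 0 < c /\ forall j, (j < N)%nat -> exists psi, Q j psi /\
     forall x, inOmega m a b x -> c <= psi x <= C.
Proof.
  induction N as [|N IH]; intros H.
  - exists 1, 1; split; [lra|]. intros; lia.
  - destruct IH as [c [C [Hc HcC]]]. { intros j Hj; apply H; lia. }
    destruct (H N ltac:(lia)) as [psi [HQ [c' [C' [Hc' Hb]]]]].
    exists (Rmin c c'), (Rmax C C'). split; [apply Rmin_pos; auto|].
    intros j Hj. destruct (Nat.eq_dec j N) as [->|Hne].
    + exists psi; split; auto. intros x Hx. destruct (Hb x Hx). split.
      * eapply Rle_trans; [apply Rmin_r|auto].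
      * eapply Rle_trans; [|apply Rmax_r]; auto.
    + destruct (HcC j ltac:(lia)) as [psi' [HQ' Hb']]. exists psi'; split; auto.
      intros x Hx. destruct (Hb' x Hx). split.
      * eapply Rle_trans; [apply Rmin_l|auto].
      * eapply Rle_trans; [|apply Rmax_l]; auto.
Qed.

Lemma grid (N : nat) (u : R) : (1 <= N)%nat -> 0 <= u <= INR N ->
  exists j, (j < N)%nat /\ INR j <= u <= INR j + 1.
Proof.
  induction N as [|N IH]; intros HN Hu; [lia|].
  destruct (Nat.eq_dec N 0) as [->|HN0].
  - exists 0%nat. split; [lia|]. simpl in *. lra.
  - destruct (Rle_dec u (INR N)) as [Hle|Hgt].
    + destruct (IH ltac:(lia) ltac:(lra)) as [j [Hj Hj']]. exists j; split; [lia|auto].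
    + exists N; split; [lia|]. rewrite S_INR in Hu. lra.
Qed.

Section H.
Variables (m : nat) (a b : nat -> R) (A : R) (K : R -> R) (Rf : R -> R -> R) (eps mu : R)
  (xi : R -> R -> R).
Hypothesis HA : 0 < A.
Hypothesis Hint : intervals_ok m a b.
Hypothesis HE : EIG2 m a b A K Rf eps mu xi.

Lemma xi_nonneg x th : inOmega m a b x -> -A <= th <= A -> 0 <= xi x th.
Proof.
  intros Hx Hth. destruct HE as [X1 [_ [_ [X4 _]]]].
  apply (lim_ge (fun t => xi x t)).
  - apply exd_cont; auto.
  - intros eta He. destruct (Rlt_le_dec th A) as [Hl|Hr].
    + destruct (approach_l th A Hl eta He) as [t [Ht Ht']]. exists t; split; auto. apply X1; auto; lra.
    + destruct (approach_r (-A) th ltac:(lra) eta He) as [t [Ht Ht']]. exists t; split; auto. apply X1; auto; lra.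
Qed.

Lemma h_WC (w : R -> R) s0 : CE w -> -A <= s0 <= A ->
  WC (fun s => -A <= s <= A) (fun s => intOmega m a b (fun x => w x * xi x s)) s0.
Proof.
  intros Hw Hs0. destruct HE as [_ [X2 [_ [_ [_ [X6 _]]]]]].
  assert (Ho := ord_of _ _ _ Hint).
  apply (intO_WC m a b (fun s x => w x * xi x s)); auto.
  - intros i Hi y Hy. apply c2_mult; [apply c2_snd; auto|].
    apply (c2_swap xi). apply cont2_c2. exact (proj1 (X6 y s0 (inBar m a b i y Hi Hy) Hs0)).
  - intros s _. apply CE_IE; auto. apply CE_mult; auto. intros y; apply exd_cont; auto.
Qed.

Lemma h1_WC (w : R -> R) s0 : CE w -> -A <= s0 <= A ->
  WC (fun s => -A <= s <= A) (fun s => intOmega m a b (fun x => w x * dth xi x s)) s0.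
Proof.
  intros Hw Hs0. destruct HE as [_ [X2 [_ [_ [_ [X6 _]]]]]].
  assert (Ho := ord_of _ _ _ Hint).
  apply (intO_WC m a b (fun s x => w x * dth xi x s)); auto.
  - intros i Hi y Hy. apply c2_mult; [apply c2_snd; auto|].
    apply (c2_swap (dth xi)). apply cont2_c2. exact (proj1 (proj2 (proj2 (X6 y s0 (inBar m a b i y Hi Hy) Hs0)))).
  - intros s Hs. apply CB_IE; auto. apply CB_mult; [apply CE_CB; auto|].
    intros i Hi y Hy. apply (c2_x (dth xi) y s). apply cont2_c2.
    exact (proj1 (proj2 (proj2 (X6 y s (inBar m a b i y Hi Hy) Hs)))).
Qed.

Lemma h1_end (w : R -> R) :
  intOmega m a b (fun x => w x * dth xi x A) = 0 /\ intOmega m a b (fun x => w x * dth xi x (-A)) = 0.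
Proof.
  destruct HE as [_ [_ [_ [_ [_ [_ [_ [_ X9]]]]]]]].
  assert (Ho := ord_of _ _ _ Hint).
  split; rewrite <- (intO_zero m a b); apply intO_ext; auto; intros i Hi x Hx;
    destruct (X9 x (inBar m a b i x Hi ltac:(lra))) as [E1 E2].
  - rewrite E2; ring.
  - rewrite E1; ring.
Qed.

Lemma CE_xi s : CE (fun x => xi x s).
Proof. destruct HE as [_ [X2 _]]. intros y; apply exd_cont; auto. Qed.

Lemma h_cmp (w : R -> R) c C s : CE w -> (forall x, inOmega m a b x -> c <= w x <= C) -> -A <= s <= A ->
  c * intOmega m a b (fun x => xi x s) <= intOmega m a b (fun x => w x * xi x s) <=
  C * intOmega m a b (fun x => xi x s).
Proof.
  intros Hw Hb Hs. assert (Ho := ord_of _ _ _ Hint).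
  assert (I0 : IE m a b (fun x => xi x s)) by (apply CE_IE; auto; apply CE_xi).
  assert (I1 : IE m a b (fun x => w x * xi x s)) by (apply CE_IE; auto; apply CE_mult; auto; apply CE_xi).
  rewrite <- !(intO_scal m a b _ _ I0). split; apply intO_le; auto.
  - apply CE_IE; auto. apply CE_mult; [apply CE_const|apply CE_xi].
  - intros i Hi x Hx. assert (Hx' := inOp m a b i x Hi Hx).
    assert (H0 := xi_nonneg x s Hx' Hs). destruct (Hb x Hx'). nra.
  - apply CE_IE; auto. apply CE_mult; [apply CE_const|apply CE_xi].
  - intros i Hi x Hx. assert (Hx' := inOp m a b i x Hi Hx).
    assert (H0 := xi_nonneg x s Hx' Hs). destruct (Hb x Hx'). nra.
Qed.

Lemma h_pos (w : R -> R) s : CE w -> (forall x, inOmega m a b x -> 0 < w x) -> -A < s < A ->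
  0 < intOmega m a b (fun x => w x * xi x s).
Proof.
  intros Hw Hb Hs. assert (Ho := ord_of _ _ _ Hint). destruct HE as [X1 _].
  apply intO_pos; auto. destruct Hint; auto.
  - apply CE_CB. apply CE_mult; auto. apply CE_xi.
  - intros i Hi x Hx. assert (Hx' := inOp m a b i x Hi Hx). apply Rmult_lt_0_compat; auto.
Qed.

Lemma h_nonneg (w : R -> R) s : CE w -> (forall x, inOmega m a b x -> 0 <= w x) -> -A <= s <= A ->
  0 <= intOmega m a b (fun x => w x * xi x s).
Proof.
  intros Hw Hb Hs. assert (Ho := ord_of _ _ _ Hint).
  rewrite <- (intO_zero m a b). apply intO_le; auto.
  - intros i Hi; apply ex_RInt_const.
  - apply CE_IE; auto. apply CE_mult; auto. apply CE_xi.
  - intros i Hi x Hx. assert (Hx' := inOp m a b i x Hi Hx).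
    assert (H0 := xi_nonneg x s Hx' Hs). specialize (Hb x Hx'). nra.
Qed.

End H.

Lemma Rf_lip m a b A Rf CR x ths th : R_ok m a b A Rf CR -> inOmega m a b x ->
  -A < ths < A -> -A < th < A -> Rabs (Rf x ths - Rf x th) <= CR * Rabs (ths - th).
Proof.
  intros [R1 [R2 [R3 R4]]] Hx Hs Ht.
  destruct (MVT_gen (fun t => Rf x t) th ths (fun t => dth Rf x t)) as [c [Hc Hc']].
  - intros y Hy. apply Derive_correct. apply R2.
  - intros y Hy. apply continuity_pt_filterlim. apply exd_cont. apply R2.
  - rewrite Hc', Rabs_mult.
    assert (-A < c < A).
    { destruct Hc as [Hc1 Hc2]. split.
      - eapply Rlt_le_trans; [|apply Hc1]. apply Rmin_glb_lt; lra.
      - eapply Rle_lt_trans; [apply Hc2|]. apply Rmax_lub_lt; lra. }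
    destruct (R4 x c Hx H) as [_ [_ Hd]].
    apply Rmult_le_compat_r; [apply Rabs_pos|lra].
Qed.

Lemma Ebound m a b A K Rf CR cK CK eps mu xi ths lam psi th :
  0 < A -> intervals_ok m a b -> R_ok m a b A Rf CR -> K_ok m a b K cK CK ->
  EIG2 m a b A K Rf eps mu xi -> EIG1 m a b K Rf ths lam psi ->
  -A < ths < A -> -A < th < A ->
  Rabs (intOmega m a b (fun x => psi x * xi x th * (Rf x ths - Rf x th))) <=
  CR * Rabs (ths - th) * intOmega m a b (fun x => psi x * xi x th).
Proof.
  intros HA Hint HR HK HE [P1 [P2 _]] Hs Ht.
  assert (Ho := ord_of _ _ _ Hint).
  assert (Cpsi : CE psi) by (intros z; apply exd_cont; auto).
  assert (Cxi := CE_xi m a b A K Rf eps mu xi HE th).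
  destruct HR as [R1 [R2 [R3 R4]]].
  assert (CRs : forall t, -A <= t <= A -> CB m a b (fun x => Rf x t)).
  { intros t Htt i Hi x Hx. apply (c2_x Rf x t). apply cont2_c2.
    exact (proj1 (R3 x t (inBar m a b i x Hi Hx) Htt)). }
  assert (I0 : IE m a b (fun x => psi x * xi x th)) by (apply CE_IE; auto; apply CE_mult; auto).
  assert (I1 : IE m a b (fun x => psi x * xi x th * (Rf x ths - Rf x th))).
  { apply CB_IE; auto. apply CB_mult; [apply CE_CB; apply CE_mult; auto|].
    apply CB_minus; apply CRs; lra. }
  set (k := CR * Rabs (ths - th)).
  assert (I2 : IE m a b (fun x => k * (psi x * xi x th))) by (apply CE_IE; auto; apply CE_mult; [apply CE_const|apply CE_mult; auto]).
  apply Rabs_le. split.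
  - replace (- (k * intOmega m a b (fun x => psi x * xi x th)))
      with (-1 * (k * intOmega m a b (fun x => psi x * xi x th))) by ring.
    rewrite <- (intO_scal m a b _ k I0), <- (intO_scal m a b _ (-1) I2).
    apply intO_le; auto.
    + apply CE_IE; auto. apply CE_mult; [apply CE_const|]. apply CE_mult; [apply CE_const|apply CE_mult; auto].
    + intros i Hi x Hx. assert (Hx' := inOp m a b i x Hi Hx).
      assert (L := Rf_lip m a b A Rf CR x ths th (conj R1 (conj R2 (conj R3 R4))) Hx' Hs Ht).
      assert (0 < psi x * xi x th) by (apply Rmult_lt_0_compat; [apply P1; auto|apply HE; auto]).
      apply Rabs_le_between in L. unfold k. nra.
  - rewrite <- (intO_scal m a b _ k I0). apply intO_le; auto.
    intros i Hi x Hx. assert (Hx' := inOp m a b i x Hi Hx).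
    assert (L := Rf_lip m a b A Rf CR x ths th (conj R1 (conj R2 (conj R3 R4))) Hx' Hs Ht).
    assert (0 < psi x * xi x th) by (apply Rmult_lt_0_compat; [apply P1; auto|apply HE; auto]).
    apply Rabs_le_between in L. unfold k. nra.
Qed.

Lemma lower_core (f F1 f2 H0 : R -> R) A t d k2 c C thj r :
  0 < A -> 0 < d -> d <= A / 4 -> 0 <= k2 -> 0 < c -> 0 <= C -> -A <= t <= A -> Rabs (t - thj) + d <= r ->
  (forall x, -A < x < A -> is_derive f x (F1 x) /\ is_derive F1 x (f2 x)) ->
  (forall x, -A < x < A -> Rabs (x - thj) <= r -> k2 * f x <= f2 x) ->
  CE f -> CE F1 -> (forall x, -A <= x <= A -> 0 <= f x) -> F1 A = 0 -> F1 (-A) = 0 ->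
  (forall s, -A <= s <= A -> f s <= C * H0 s) -> (forall s, -A <= s <= A -> H0 s <= H0 t) ->
  c * H0 t <= f t -> 0 < H0 t ->
  c * (1 + k2 * d ^ 2 / 2) <= C.
Proof.
  intros HA Hd HdA Hk Hc HC Ht Htr HD Hf2 Cf CF1 Hf0 FA FmA Hup Hmax Hlow H0p.
  assert (Hwin : forall x, Rabs (x - t) <= d -> Rabs (x - thj) <= r).
  { intros x Hx. replace (x - thj) with ((x - t) + (t - thj)) by ring.
    eapply Rle_trans; [apply Rabs_triang|]. lra. }
  assert (Habs : forall x y, x <= y -> y <= x + d -> Rabs (y - x) <= d /\ Rabs (x - y) <= d).
  { intros x y H1 H2. rewrite (Rabs_right (y - x)) by lra. rewrite (Rabs_left1 (x - y)) by lra. lra. }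
  assert (Fin : forall s, -A <= s <= A -> f t * (1 + k2 * d ^ 2 / 2) <= f s -> False -> False).
  { auto. }
  assert (Fin2 : forall s, -A <= s <= A -> f t * (1 + k2 * d ^ 2 / 2) <= f s ->
            c * (1 + k2 * d ^ 2 / 2) <= C).
  { intros s Hs Hg. specialize (Hup s Hs). specialize (Hmax s Hs).
    assert (0 <= k2 * d ^ 2 / 2) by (apply Rmult_le_pos; [apply Rmult_le_pos; auto; apply pow2_ge_0|lra]).
    assert (c * H0 t * (1 + k2 * d ^ 2 / 2) <= C * H0 t).
    { apply Rle_trans with (f t * (1 + k2 * d ^ 2 / 2)). apply Rmult_le_compat_r; lra.
      apply Rle_trans with (f s); auto. apply Rle_trans with (C * H0 s); auto.
      apply Rmult_le_compat_l; auto. }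
    apply (Rmult_le_reg_r (H0 t)); auto. lra. }
  destruct (Rle_dec (t + d) A) as [R1|R1]; destruct (Rle_dec 0 (F1 t)) as [R2|R2].
  -
    apply (Fin2 (t + d)); [lra|].
    apply (grow_r f F1 f2 t d k2); auto.
    + intros x Hx. destruct (HD x ltac:(lra)) as [D1 D2]. split; [exact D1|split; [exact D2|]].
      apply Hf2; [lra|]. apply Hwin. destruct (Habs t x); lra.
    + intros x Hx. split; [apply Cf|split; [apply CF1|apply Hf0; lra]].
  - destruct (Rle_dec (-A) (t - d)) as [L1|L1].
    + apply (Fin2 (t - d)); [lra|].
      apply (grow_l f F1 f2 t d k2); auto; [| |lra].
      * intros x Hx. destruct (HD x ltac:(lra)) as [D1 D2]. split; [exact D1|split; [exact D2|]].
        apply Hf2; [lra|]. apply Hwin. destruct (Habs x t); lra.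
      * intros x Hx. split; [apply Cf|split; [apply CF1|apply Hf0; lra]].
    + exfalso. (* F1 nondecreasing on [-A, t] gives 0 <= F1 t *)
      assert (F1 (-A) <= F1 t).
      { apply (mono F1 f2); [lra| | |].
        - intros x Hx; apply HD; lra.
        - intros x _; apply CF1.
        - intros x Hx. apply Rle_trans with (k2 * f x).
          + apply Rmult_le_pos; auto. apply Hf0; lra.
          + apply Hf2; [lra|]. apply Hwin. destruct (Habs x t); lra. }
      lra.
  - (* F1 nondecreasing on [t, A] gives F1 t <= 0 *)
    assert (F1 t <= F1 A).
    { apply (mono F1 f2); [lra| | |].
      - intros x Hx; apply HD; lra.
      - intros x _; apply CF1.
      - intros x Hx. apply Rle_trans with (k2 * f x).
        + apply Rmult_le_pos; auto. apply Hf0; lra.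
        + apply Hf2; [lra|]. apply Hwin. destruct (Habs t x); lra. }
    destruct (Rle_dec (-A) (t - d)) as [L1|L1]; [|exfalso; lra].
    apply (Fin2 (t - d)); [lra|].
    apply (grow_l f F1 f2 t d k2); auto; [| |lra].
    * intros x Hx. destruct (HD x ltac:(lra)) as [D1 D2]. split; [exact D1|split; [exact D2|]].
      apply Hf2; [lra|]. apply Hwin. destruct (Habs x t); lra.
    * intros x Hx. split; [apply Cf|split; [apply CF1|apply Hf0; lra]].
  - destruct (Rle_dec (-A) (t - d)) as [L1|L1].
    + apply (Fin2 (t - d)); [lra|].
      apply (grow_l f F1 f2 t d k2); auto; [| |lra].
      * intros x Hx. destruct (HD x ltac:(lra)) as [D1 D2]. split; [exact D1|split; [exact D2|]].
        apply Hf2; [lra|]. apply Hwin. destruct (Habs x t); lra.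
      * intros x Hx. split; [apply Cf|split; [apply CF1|apply Hf0; lra]].
    + exfalso. lra.
Qed.

Lemma CR_pos m a b A Rf CR : 0 < A -> intervals_ok m a b -> R_ok m a b A Rf CR -> 0 < CR.
Proof.
  intros HA [Hm [Ho _]] [_ [_ [_ R4]]].
  assert (H0 : (0 < m)%nat) by lia. assert (Hab := Ho 0%nat H0).
  destruct (R4 ((a 0%nat + b 0%nat) / 2) 0) as [H _].
  - exists 0%nat; split; auto; lra.
  - lra.
  - eapply Rle_lt_trans; [apply Rabs_pos|exact H].
Qed.

Lemma upper (A : R) (m : nat) (a b : nat -> R) (Rf : R -> R -> R) (CR : R)
  (K : R -> R) (cK CK : R) (lam : R -> R) (mu : R -> R) (theta0 : R) :
  0 < A -> intervals_ok m a b -> R_ok m a b A Rf CR -> K_ok m a b K cK CK ->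
  (forall th, -A <= th <= A -> is_principal_eig1 m a b K Rf th (fun _ => 0) (lam th)) ->
  (forall eps, 0 < eps -> is_principal_eig2 m a b A K Rf eps (mu eps)) ->
  -A < theta0 < A ->
  forall del, 0 < del -> exists e0, 0 < e0 /\ forall eps, 0 < eps < e0 -> mu eps <= lam theta0 + del.
Proof.
  intros HA Hint HR HK Heig1 Heig2 Hth0 del Hdel.
  assert (HCR := CR_pos m a b A Rf CR HA Hint HR).
  destruct (eig1_unfold _ _ _ _ _ _ _ (Heig1 theta0 ltac:(lra))) as [psi Hpsi].
  assert (Cpsi : CE psi) by (intros z; apply exd_cont; apply Hpsi).
  set (r := Rmin (del / (2 * CR)) (Rmin ((theta0 + A) / 2) ((A - theta0) / 2))).
  assert (Hr1 : r <= del / (2 * CR)) by apply Rmin_l.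
  assert (Hr2 : r <= (theta0 + A) / 2) by (eapply Rle_trans; [apply Rmin_r|apply Rmin_l]).
  assert (Hr3 : r <= (A - theta0) / 2) by (eapply Rle_trans; [apply Rmin_r|apply Rmin_r]).
  assert (Hr : 0 < r).
  { unfold r. apply Rmin_pos; [apply Rdiv_lt_0_compat; lra|apply Rmin_pos; lra]. }
  set (q := sqrt (del / 2)).
  assert (Hq : 0 < q) by (apply sqrt_lt_R0; lra).
  assert (Hqq : q * q = del / 2) by (apply sqrt_sqrt; lra).
  assert (HPI := PI_RGT_0).
  exists (2 * r * q / PI). split; [apply Rdiv_lt_0_compat; nra|].
  intros eps [He1 He2]. apply Rnot_lt_le. intros Hlt.
  destruct (eig2_unfold _ _ _ _ _ _ _ _ (Heig2 eps He1)) as [xi Hxi].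
  set (k := q / eps).
  assert (Hk : 0 < k) by (apply Rdiv_lt_0_compat; lra).
  assert (Hw : PI / (2 * k) < r).
  { assert (H1 : eps * PI < 2 * r * q).
    { apply (Rmult_lt_compat_r PI) in He2; [|lra].
      replace (2 * r * q / PI * PI) with (2 * r * q) in He2 by (field; lra). lra. }
    replace (PI / (2 * k)) with (PI * eps / (2 * q)) by (unfold k; field; lra).
    apply Rmult_lt_reg_r with (2 * q); [lra|].
    replace (PI * eps / (2 * q) * (2 * q)) with (PI * eps) by (field; lra). lra. }
  apply (sturm (fun t => intOmega m a b (fun x => psi x * xi x t))
               (fun t => intOmega m a b (fun x => psi x * dth xi x t))
               (fun t => intOmega m a b (fun x => psi x * dthth xi x t)) theta0 k Hk).
  intros x Hx.
  assert (Hx' : -A < x < A) by lra.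
  destruct (key m a b A K Rf cK CK CR theta0 (lam theta0) eps (mu eps) psi xi x Hint HK HR
               ltac:(lra) Hpsi Hxi Hx') as [D1 [D2 Eq]].
  assert (Hh : 0 < intOmega m a b (fun y => psi y * xi y x)).
  { apply (h_pos m a b A K Rf eps (mu eps) xi Hint Hxi); auto. apply Hpsi. }
  assert (HE := Ebound m a b A K Rf CR cK CK eps (mu eps) xi theta0 (lam theta0) psi x HA Hint HR HK Hxi Hpsi Hth0 Hx').
  apply Rabs_le_between in HE. destruct HE as [_ HE].
  set (h := intOmega m a b (fun y => psi y * xi y x)) in *.
  set (h2 := intOmega m a b (fun y => psi y * dthth xi y x)) in *.
  set (E := intOmega m a b (fun y => psi y * xi y x * (Rf y theta0 - Rf y x))) in *.
  split; [exact D1|split; [exact D2|split; [exact Hh|]]].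
  assert (Hd : Rabs (theta0 - x) <= r).
  { apply Rabs_le. lra. }
  assert (HE' : E <= del / 2 * h).
  { apply Rle_trans with (CR * Rabs (theta0 - x) * h); auto.
    apply Rmult_le_compat_r; [lra|].
    apply Rle_trans with (CR * r). apply Rmult_le_compat_l; lra.
    apply Rle_trans with (CR * (del / (2 * CR))). apply Rmult_le_compat_l; lra.
    right; field; lra. }
  assert (Hh2 : eps ^ 2 * h2 <= - (del / 2) * h) by nra.
  assert (Hkk : k ^ 2 = (del / 2) / eps ^ 2).
  { unfold k. rewrite <- Hqq. field. lra. }
  rewrite Hkk.
  apply (Rmult_le_reg_l (eps ^ 2)); [apply pow_lt; lra|].
  replace (eps ^ 2 * (- (del / 2 / eps ^ 2) * h)) with (- (del / 2) * h) by (field; lra).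
  exact Hh2.
Qed.

Lemma WC_ext D (F G : R -> R) s0 : (forall s, F s = G s) -> WC D F s0 -> WC D G s0.
Proof.
  intros E H eps He. destruct (H eps He) as [d [Hd H']]. exists d; split; auto.
  intros s Hs Hss. rewrite <- !E. auto.
Qed.

Lemma lower (A : R) (m : nat) (a b : nat -> R) (Rf : R -> R -> R) (CR : R)
  (K : R -> R) (cK CK : R) (lam : R -> R) (mu : R -> R) (theta0 : R) :
  0 < A -> intervals_ok m a b -> R_ok m a b A Rf CR -> K_ok m a b K cK CK ->
  (forall th, -A <= th <= A -> is_principal_eig1 m a b K Rf th (fun _ => 0) (lam th)) ->
  (forall eps, 0 < eps -> is_principal_eig2 m a b A K Rf eps (mu eps)) ->
  -A < theta0 < A ->
  (forall th, -A < th < A -> lam theta0 <= lam th) ->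
  forall del, 0 < del -> exists e1, 0 < e1 /\ forall eps, 0 < eps < e1 -> lam theta0 - del <= mu eps.
Proof.
  intros HA Hint HR HK Heig1 Heig2 Hth0 Hmin del Hdel.
  assert (HCR := CR_pos m a b A Rf CR HA Hint HR).
  assert (Ho := ord_of _ _ _ Hint).
  set (r := Rmin (del / (2 * CR)) A).
  assert (Hr1 : r <= del / (2 * CR)) by apply Rmin_l.
  assert (Hr2 : r <= A) by apply Rmin_r.
  assert (Hr : 0 < r) by (unfold r; apply Rmin_pos; [apply Rdiv_lt_0_compat; lra|lra]).
  set (d := r / 4).
  destruct (INR_unbounded (4 * A / r)) as [N HN].
  assert (HN0 : 0 < INR N).
  { assert (0 < 4 * A / r) by (apply Rdiv_lt_0_compat; lra). lra. }
  assert (HN1 : (1 <= N)%nat).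
  { destruct N; [simpl in HN0; lra|lia]. }
  assert (HAN : A / INR N <= r / 4).
  { apply (Rmult_le_reg_r (INR N)); auto. unfold Rdiv.
    rewrite Rmult_assoc, Rinv_l, Rmult_1_r by lra.
    apply (Rmult_lt_compat_r r) in HN; [|lra].
    replace (4 * A / r * r) with (4 * A) in HN by (field; lra). lra. }
  set (th := fun j : nat => -A + (2 * INR j + 1) * A / INR N).
  assert (Hth : forall j, (j < N)%nat -> -A < th j < A).
  { intros j Hj. unfold th.
    assert (HjN : INR j + 1 <= INR N) by (rewrite <- S_INR; apply le_INR; lia).
    assert (0 <= INR j) by apply pos_INR.
    split.
    - assert (0 < (2 * INR j + 1) * A / INR N) by (apply Rdiv_lt_0_compat; [nra|lra]). lra.
    - assert ((2 * INR j + 1) * A / INR N < 2 * A); [|lra].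
      apply (Rmult_lt_reg_r (INR N)); auto. unfold Rdiv.
      rewrite Rmult_assoc, Rinv_l, Rmult_1_r by lra. nra. }
  destruct (uniform_bounds N (fun j psi => EIG1 m a b K Rf (th j) (lam (th j)) psi) m a b)
    as [c [C [Hc HcC]]].
  { intros j Hj. assert (Hj' := Hth j Hj).
    destruct (eig1_unfold _ _ _ _ _ _ _ (Heig1 (th j) ltac:(lra))) as [psi Hpsi].
    exists psi; split; auto.
    apply (psi_bounds m a b K cK CK Rf A CR (th j) (lam (th j)) psi Hint HK HR ltac:(lra) Hpsi). }
  assert (HcC' : c <= C).
  { destruct (HcC 0%nat ltac:(lia)) as [psi [_ Hb]].
    assert (Hm : (0 < m)%nat) by (destruct Hint; lia). assert (Hab := Ho 0%nat Hm).
    destruct (Hb ((a 0%nat + b 0%nat) / 2)) as [B1 B2]; [exists 0%nat; split; auto; lra|lra]. }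
  assert (Hd : 0 < d) by (unfold d; lra).
  set (e1 := sqrt (del * d ^ 2 * c / (4 * C))).
  assert (He1p : 0 < del * d ^ 2 * c / (4 * C)).
  { apply Rdiv_lt_0_compat; [|lra]. apply Rmult_lt_0_compat; [|lra].
    apply Rmult_lt_0_compat; [lra|]. apply pow_lt; lra. }
  exists e1. split; [apply sqrt_lt_R0; auto|].
  intros eps [He1 He2]. apply Rnot_lt_le. intros Hlt.
  destruct (eig2_unfold _ _ _ _ _ _ _ _ (Heig2 eps He1)) as [xi Hxi].
  set (H0 := fun s => intOmega m a b (fun x => xi x s)).
  assert (E1 : forall s, intOmega m a b (fun x => 1 * xi x s) = H0 s).
  { intros s. unfold H0. apply intO_ext; auto. intros; ring. }
  assert (CH0 : CE (fun s => H0 (clamp A s))).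
  { apply (WC_clamp A H0); auto. intros s0 Hs0. apply (WC_ext _ (fun s => intOmega m a b (fun x => 1 * xi x s))); auto.
    apply (h_WC m a b A K Rf eps (mu eps) xi Hint Hxi (fun _ => 1)); auto. apply CE_const. }
  destruct (continuity_ab_maj (fun s => H0 (clamp A s)) (-A) A) as [t [Hmax Ht]]; [lra| |].
  { intros; apply continuity_pt_filterlim; apply CH0. }
  rewrite (clamp_id A t Ht) in Hmax.
  assert (Hmax' : forall s, -A <= s <= A -> H0 s <= H0 t).
  { intros s Hs. specialize (Hmax s Hs). rewrite (clamp_id A s Hs) in Hmax. exact Hmax. }
  assert (H0p : 0 < H0 t).
  { apply Rlt_le_trans with (H0 0); [|apply Hmax'; lra].
    rewrite <- E1. apply (h_pos m a b A K Rf eps (mu eps) xi Hint Hxi (fun _ => 1)); [apply CE_const| |lra].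
    intros; lra. }
  set (u := (t + A) * INR N / (2 * A)).
  destruct (grid N u HN1) as [j [Hj Hju]].
  { unfold u. split.
    - apply Rdiv_le_0_compat; [|lra]. apply Rmult_le_pos; lra.
    - apply (Rmult_le_reg_r (2 * A)); [lra|]. unfold Rdiv.
      rewrite Rmult_assoc, Rinv_l, Rmult_1_r by lra. nra. }
  assert (Htj : Rabs (t - th j) <= A / INR N).
  { assert (E : t - th j = A / INR N * (2 * u - 2 * INR j - 1)).
    { unfold th, u. field. split; lra. }
    rewrite E, Rabs_mult, (Rabs_right (A / INR N)) by (apply Rle_ge, Rdiv_le_0_compat; lra).
    rewrite <- (Rmult_1_r (A / INR N)) at 2. apply Rmult_le_compat_l; [apply Rdiv_le_0_compat; lra|].
    apply Rabs_le. lra. }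
  destruct (HcC j Hj) as [psi [Hpsi Hb]].
  assert (Hthj := Hth j Hj).
  assert (Cpsi : CE psi) by (intros z; apply exd_cont; apply Hpsi).
  assert (Hpsi0 : forall x, inOmega m a b x -> 0 <= psi x) by (intros x Hx; destruct (Hb x Hx); lra).
  set (k2 := (del / 2) / eps ^ 2).
  assert (Hk2 : 0 <= k2) by (unfold k2; apply Rdiv_le_0_compat; [lra|apply pow_lt; lra]).
  assert (Hcore : c * (1 + k2 * d ^ 2 / 2) <= C).
  { apply (lower_core (fun s => intOmega m a b (fun x => psi x * xi x (clamp A s)))
                      (fun s => intOmega m a b (fun x => psi x * dth xi x (clamp A s)))
                      (fun s => intOmega m a b (fun x => psi x * dthth xi x s))
                      H0 A t d k2 c C (th j) r); auto.
    - unfold d; lra.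
    - lra.
    - unfold d; lra.
    - intros x Hx. rewrite (clamp_id A x ltac:(lra)).
      destruct (key m a b A K Rf cK CK CR (th j) (lam (th j)) eps (mu eps) psi xi x Hint HK HR
                 ltac:(lra) Hpsi Hxi Hx) as [D1 [D2 _]].
      split.
      + apply (is_derive_ext_loc (fun s => intOmega m a b (fun y => psi y * xi y s))); auto.
        eapply filter_imp; [|apply (loc_open A x Hx)]. intros s Hs. rewrite (clamp_id A s ltac:(lra)). auto.
      + apply (is_derive_ext_loc (fun s => intOmega m a b (fun y => psi y * dth xi y s))); auto.
        eapply filter_imp; [|apply (loc_open A x Hx)]. intros s Hs. rewrite (clamp_id A s ltac:(lra)). auto.
    - intros x Hx Hxr. cbv beta. rewrite (clamp_id A x ltac:(lra)).
      destruct (key m a b A K Rf cK CK CR (th j) (lam (th j)) eps (mu eps) psi xi x Hint HK HR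
                 ltac:(lra) Hpsi Hxi Hx) as [_ [_ Eq]].
      assert (HE := Ebound m a b A K Rf CR cK CK eps (mu eps) xi (th j) (lam (th j)) psi x HA Hint HR HK Hxi Hpsi Hthj Hx).
      apply Rabs_le_between in HE. destruct HE as [HE _].
      assert (Hh : 0 <= intOmega m a b (fun y => psi y * xi y x))
        by (apply (h_nonneg m a b A K Rf eps (mu eps) xi HA Hint Hxi); auto; lra).
      assert (Hlj : lam theta0 <= lam (th j)) by (apply Hmin; auto).
      set (h := intOmega m a b (fun y => psi y * xi y x)) in *.
      set (h2 := intOmega m a b (fun y => psi y * dthth xi y x)) in *.
      set (E := intOmega m a b (fun y => psi y * xi y x * (Rf y (th j) - Rf y x))) in *.
      assert (HE' : - (del / 2 * h) <= E).
      { apply Rle_trans with (- (CR * Rabs (th j - x) * h)); auto.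
        apply Ropp_le_contravar. apply Rmult_le_compat_r; [lra|].
        rewrite Rabs_minus_sym.
        apply Rle_trans with (CR * r). apply Rmult_le_compat_l; lra.
        apply Rle_trans with (CR * (del / (2 * CR))). apply Rmult_le_compat_l; lra.
        right; field; lra. }
      assert (Hh2 : del / 2 * h <= eps ^ 2 * h2) by nra.
      apply (Rmult_le_reg_l (eps ^ 2)); [apply pow_lt; lra|].
      unfold k2. replace (eps ^ 2 * (del / 2 / eps ^ 2 * h)) with (del / 2 * h) by (field; lra).
      exact Hh2.
    - apply (WC_clamp A (fun s => intOmega m a b (fun x => psi x * xi x s))); auto.
      intros s0 Hs0. apply (h_WC m a b A K Rf eps (mu eps) xi Hint Hxi psi); auto.
    - apply (WC_clamp A (fun s => intOmega m a b (fun x => psi x * dth xi x s))); auto.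
      intros s0 Hs0. apply (h1_WC m a b A K Rf eps (mu eps) xi Hint Hxi psi); auto.
    - intros x Hx. cbv beta. apply (h_nonneg m a b A K Rf eps (mu eps) xi HA Hint Hxi); auto.
      apply clamp_in; lra.
    - cbv beta. rewrite (clamp_id A A ltac:(lra)). apply (h1_end m a b A K Rf eps (mu eps) xi Hint Hxi psi).
    - cbv beta. rewrite (clamp_id A (-A) ltac:(lra)). apply (h1_end m a b A K Rf eps (mu eps) xi Hint Hxi psi).
    - intros s Hs. cbv beta. rewrite (clamp_id A s Hs).
      apply (h_cmp m a b A K Rf eps (mu eps) xi HA Hint Hxi psi c C s); auto.
    - cbv beta. rewrite (clamp_id A t Ht).
      apply (h_cmp m a b A K Rf eps (mu eps) xi HA Hint Hxi psi c C t); auto. }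
  assert (Heps2 : eps ^ 2 < del * d ^ 2 * c / (4 * C)).
  { assert (e1 ^ 2 = del * d ^ 2 * c / (4 * C)) by (unfold e1; rewrite <- Rsqr_pow2; apply Rsqr_sqrt; lra).
    rewrite <- H. assert (0 < e1) by lra. nra. }
  assert (C < c * (k2 * d ^ 2 / 2)).
  { unfold k2.
    replace (c * (del / 2 / eps ^ 2 * d ^ 2 / 2)) with ((del * d ^ 2 * c / 4) / eps ^ 2) by (field; lra).
    apply (Rmult_lt_reg_r (eps ^ 2)); [apply pow_lt; lra|].
    replace (del * d ^ 2 * c / 4 / eps ^ 2 * eps ^ 2) with (del * d ^ 2 * c / 4) by (field; lra).
    apply (Rmult_lt_compat_l C) in Heps2; [|lra].
    replace (C * (del * d ^ 2 * c / (4 * C))) with (del * d ^ 2 * c / 4) in Heps2 by (field; lra).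
    exact Heps2. }
  nra.
Qed.

Theorem lemma1 (A : R) (m : nat) (a b : nat -> R) (Rf : R -> R -> R) (CR : R)
  (K : R -> R) (cK CK : R) (lam : R -> R) (mu : R -> R) (theta0 : R) :
  0 < A ->
  intervals_ok m a b ->
  R_ok m a b A Rf CR ->
  K_ok m a b K cK CK ->
  (forall th, -A <= th <= A ->
     is_principal_eig1 m a b K Rf th (fun _ => 0) (lam th)) ->
  (forall eps, 0 < eps -> is_principal_eig2 m a b A K Rf eps (mu eps)) ->
  -A < theta0 < A ->
  (forall th, -A < th < A -> lam theta0 <= lam th) ->
  lam theta0 < 0 ->
  filterlim mu (at_right 0) (locally (lam theta0)).
Proof.
  intros HA Hint HR HK Heig1 Heig2 Hth0 Hmin Hneg.
  apply filterlim_locally. intros eps.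
  assert (He := cond_pos eps).
  destruct (upper A m a b Rf CR K cK CK lam mu theta0 HA Hint HR HK Heig1 Heig2 Hth0 (eps / 2) ltac:(lra))
    as [e0 [He0 Hu]].
  destruct (lower A m a b Rf CR K cK CK lam mu theta0 HA Hint HR HK Heig1 Heig2 Hth0 Hmin (eps / 2) ltac:(lra))
    as [e1 [He1 Hl]].
  exists (mkposreal (Rmin e0 e1) (Rmin_pos _ _ He0 He1)). simpl.
  intros y Hy Hy0.
  change (Rabs (y - 0) < Rmin e0 e1) in Hy.
  rewrite Rminus_0_r, Rabs_right in Hy by lra.
  assert (y < e0) by (eapply Rlt_le_trans; [apply Hy|apply Rmin_l]).
  assert (y < e1) by (eapply Rlt_le_trans; [apply Hy|apply Rmin_r]).
  specialize (Hu y ltac:(lra)). specialize (Hl y ltac:(lra)).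
  change (Rabs (mu y - lam theta0) < eps).
  apply Rabs_def1; lra.
Qed.
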